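(* Let $\alpha_*:[p,q]\to\mathbb{R}^2$ be a (not necessarily closed) smooth regular curve in $\mathbb{R}^2=\{t=0\}\subset\mathbb{R}^{1+2}$ with unit tangent vector field $U_*$, and let $V_* = \partial_t + \beta_*$ be a smooth timelike vector field along $\alpha_*$ normal to $\alpha_*$ (so $\beta_*:[p,q]\to\mathbb{R}^2$ is normal to $\alpha_*$ with $|\beta_*|<1$). Let $\partial_t + a_*$ and $-\partial_t + b_*$ be the null vector fields in the span of $\{U_*,V_*\}$ such that $\langle a_*,U_*\rangle>0$ and $\langle b_*,U_*\rangle>0$. Define the timelikeness index \[ j(\alpha_*,\beta_* ) = L(\alpha_* )\left\{\int_{\alpha_*}\frac{1}{\sqrt{1-|\beta_*|^2}}\,|d\alpha_*|\right\}^{-1}\in(0,1], \] where $L(\alpha_* )$ is the length of $\alpha_*$. If \[ j(\alpha_*,\beta_* ) > \frac32\int_{\alpha_*}\big[|\nabla_{U_*}a_*| + |\nabla_{U_*}b_*|\big]\,|d\alpha_*|, \] then, with $T = L(\alpha_* )/j(\alpha_*,\beta_* )$, there exist two smooth functions $p(\cdot),q(\cdot):[0,T]\to\mathbb{R}$ with $p(0)=p$, $q(0)=q$, $p(T)=q(T)$, and a map $\gamma:\Omega\to\mathbb{R}^2$ with $\Omega=\{(t,x): t\in[0,T],\ x\in[p(t),q(t)]\}$ such that the map $(t,x)\mapsto(t,\gamma(t,x))$ defines a regular timelike maximal surface which contains $\alpha_*$, is tangential to $V_*$ along $\alpha_*$, and whose lateral boundary consists of two null curves.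
   Context: $\mathbb{R}^{1+2}$ is Minkowski space with metric $-dt^2+(dx^1)^2+(dx^2)^2$. The vectors $a_*,b_*$ are unit vectors in $\mathbb{R}^2$ (explicitly $a_* = \beta_* + \sqrt{1-|\beta_*|^2}\,U_*$ and $b_* = -\beta_* + \sqrt{1-|\beta_*|^2}\,U_*$). $\nabla_{U_*}a_*$ denotes the derivative of $a_*$ with respect to arclength along $\alpha_*$, and $\int_{\alpha_*}\cdot\,|d\alpha_*|$ denotes integration with respect to arclength. A regular timelike maximal surface is an immersed surface whose induced metric is Lorentzian and whose mean curvature vector vanishes. *)

(* Defs.v *)
From Stdlib Require Import Reals List.
From Coquelicot Require Import Coquelicot.
Open Scope R_scope.

Definition vec2 := (R * R)%type.
Definition dot2 (u v : vec2) : R := fst u * fst v + snd u * snd v.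
Definition norm2 (u : vec2) : R := sqrt (dot2 u u).

(* a vector of R^{1+2} is (t-component, x1-component, x2-component) *)
Record vec3 := mkV3 { v0 : R; v1 : R; v2 : R }.
Definition mink (u w : vec3) : R := - v0 u * v0 w + v1 u * v1 w + v2 u * v2 w.
Definition v3add (u w : vec3) : vec3 := mkV3 (v0 u + v0 w) (v1 u + v1 w) (v2 u + v2 w).
Definition v3scal (c : R) (u : vec3) : vec3 := mkV3 (c * v0 u) (c * v1 u) (c * v2 u).
Definition v3zero : vec3 := mkV3 0 0 0.

Definition smooth1 (f : R -> R) : Prop := forall (n : nat) (x : R), ex_derive_n f n x.
Definition smooth_curve (c : R -> vec2) : Prop :=
  smooth1 (fun s => fst (c s)) /\ smooth1 (fun s => snd (c s)).

Definition dT (f : R -> R -> R) : R -> R -> R := fun t x => Derive (fun s => f s x) t.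
Definition dX (f : R -> R -> R) : R -> R -> R := fun t x => Derive (fun y => f t y) x.

Fixpoint Dlist (l : list bool) (f : R -> R -> R) : R -> R -> R :=
  match l with
  | nil => f
  | b :: l' => if b then dT (Dlist l' f) else dX (Dlist l' f)
  end.

Definition smooth2 (f : R -> R -> R) : Prop :=
  forall l : list bool,
    (forall t x, ex_derive (fun s => Dlist l f s x) t /\ ex_derive (fun y => Dlist l f t y) x) /\
    (forall z : R * R, continuous (fun w : R * R => Dlist l f (fst w) (snd w)) z).

Definition smooth_map2 (g : R -> R -> vec2) : Prop :=
  smooth2 (fun t x => fst (g t x)) /\ smooth2 (fun t x => snd (g t x)).

Definition dcurve (c : R -> vec2) (s : R) : vec2 :=
  (Derive (fun r => fst (c r)) s, Derive (fun r => snd (c r)) s).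

Definition unitT (al : R -> vec2) (s : R) : vec2 :=
  let d := dcurve al s in (fst d / norm2 d, snd d / norm2 d).

Definition avec (al be : R -> vec2) (s : R) : vec2 :=
  let k := sqrt (1 - (norm2 (be s))^2) in
  (fst (be s) + k * fst (unitT al s), snd (be s) + k * snd (unitT al s)).
Definition bvec (al be : R -> vec2) (s : R) : vec2 :=
  let k := sqrt (1 - (norm2 (be s))^2) in
  (- fst (be s) + k * fst (unitT al s), - snd (be s) + k * snd (unitT al s)).

(* nabla_{U_star} c : derivative with respect to arclength along al *)
Definition nablaU (al : R -> vec2) (c : R -> vec2) (s : R) : vec2 :=
  let d := dcurve c s in
  (fst d / norm2 (dcurve al s), snd d / norm2 (dcurve al s)).

Definition arcInt (al : R -> vec2) (p q : R) (f : R -> R) : R :=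
  RInt (fun s => f s * norm2 (dcurve al s)) p q.

Definition length (al : R -> vec2) (p q : R) : R := arcInt al p q (fun _ => 1).

Definition jindex (al be : R -> vec2) (p q : R) : R :=
  length al p q / arcInt al p q (fun s => / sqrt (1 - (norm2 (be s))^2)).

Definition g1 (ga : R -> R -> vec2) := fun t x => fst (ga t x).
Definition g2 (ga : R -> R -> vec2) := fun t x => snd (ga t x).

Definition Xt (ga : R -> R -> vec2) t x : vec3 := mkV3 1 (dT (g1 ga) t x) (dT (g2 ga) t x).
Definition Xx (ga : R -> R -> vec2) t x : vec3 := mkV3 0 (dX (g1 ga) t x) (dX (g2 ga) t x).
Definition Xtt (ga : R -> R -> vec2) t x : vec3 :=
  mkV3 0 (dT (dT (g1 ga)) t x) (dT (dT (g2 ga)) t x).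
Definition Xtx (ga : R -> R -> vec2) t x : vec3 :=
  mkV3 0 (dX (dT (g1 ga)) t x) (dX (dT (g2 ga)) t x).
Definition Xxx (ga : R -> R -> vec2) t x : vec3 :=
  mkV3 0 (dX (dX (g1 ga)) t x) (dX (dX (g2 ga)) t x).

Definition gtt ga t x := mink (Xt ga t x) (Xt ga t x).
Definition gtx ga t x := mink (Xt ga t x) (Xx ga t x).
Definition gxx ga t x := mink (Xx ga t x) (Xx ga t x).
Definition gdet ga t x := gtt ga t x * gxx ga t x - (gtx ga t x)^2.
Definition itt ga t x := gxx ga t x / gdet ga t x.
Definition itx ga t x := - gtx ga t x / gdet ga t x.
Definition ixx ga t x := gtt ga t x / gdet ga t x.

Definition regular_at ga t x : Prop :=
  forall c1 c2 : R, v3add (v3scal c1 (Xt ga t x)) (v3scal c2 (Xx ga t x)) = v3zero ->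
    c1 = 0 /\ c2 = 0.
(* timelike: induced metric Lorentzian (2x2 symmetric with negative determinant) *)
Definition timelike_at ga t x : Prop := gdet ga t x < 0.

Definition nproj ga t x (v : vec3) : vec3 :=
  let at_ := mink v (Xt ga t x) in
  let ax := mink v (Xx ga t x) in
  let ct := itt ga t x * at_ + itx ga t x * ax in
  let cx := itx ga t x * at_ + ixx ga t x * ax in
  v3add v (v3scal (-1) (v3add (v3scal ct (Xt ga t x)) (v3scal cx (Xx ga t x)))).

Definition meanCurv ga t x : vec3 :=
  v3scal (1/2) (nproj ga t x
    (v3add (v3scal (itt ga t x) (Xtt ga t x))
      (v3add (v3scal (2 * itx ga t x) (Xtx ga t x))
             (v3scal (ixx ga t x) (Xxx ga t x))))).

Definition maximal_at ga t x : Prop := meanCurv ga t x = v3zero.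

Definition Omega (P Q : R -> R) (T : R) (t x : R) : Prop :=
  0 <= t <= T /\ P t <= x <= Q t.

Definition null_boundary (ga : R -> R -> vec2) (c : R -> R) (T : R) : Prop :=
  forall t, 0 <= t <= T ->
    let w := mkV3 1 (Derive (fun s => g1 ga s (c s)) t) (Derive (fun s => g2 ga s (c s)) t) in
    mink w w = 0.

(* Main.v *)
Require Import Defs.
From Stdlib Require Import Reals.
From Coquelicot Require Import Coquelicot.
Open Scope R_scope.
From Stdlib Require Import Lra Lia FunctionalExtensionality Classical ClassicalEpsilon.
From Stdlib Require List.
Open Scope list_scope.
Open Scope R_scope.

Lemma isd_plus (f g : R -> R) x a b : is_derive f x a -> is_derive g x b -> is_derive (fun y => f y + g y) x (a+b).
Proof. intros; apply (is_derive_plus f g x a b); auto. Qed.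
Lemma isd_opp (f : R -> R) x a : is_derive f x a -> is_derive (fun y => - f y) x (- a).
Proof. intros; apply (is_derive_opp f x a); auto. Qed.
Lemma isd_mult (f g : R -> R) x a b : is_derive f x a -> is_derive g x b -> is_derive (fun y => f y * g y) x (a * g x + f x * b).
Proof. intros; apply (is_derive_mult f g x a b); auto. intros; apply Rmult_comm. Qed.
Lemma isd_comp (f g : R -> R) x a b : is_derive f (g x) a -> is_derive g x b -> is_derive (fun y => f (g y)) x (b * a).
Proof. intros; apply (is_derive_comp f g x a b); auto. Qed.
Lemma isd_const (c x : R) : is_derive (fun _ => c) x 0.
Proof. apply is_derive_Reals; apply derivable_pt_lim_const. Qed.
Lemma isd_id (x : R) : is_derive (fun y => y) x 1.
Proof. apply is_derive_Reals; apply derivable_pt_lim_id. Qed.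

Fixpoint Ck (n:nat) (f:R->R) : Prop :=
  match n with O => True | S m => (forall x, ex_derive f x) /\ Ck m (Derive f) end.
Definition Cinf (f:R->R) := forall n, Ck n f.

Lemma Ck_ext n : forall f g, (forall x, f x = g x) -> Ck n f -> Ck n g.
Proof.
induction n as [|n IH]; simpl; auto.
intros f g E [H1 H2]; split.
- intro x; apply ex_derive_ext with f; auto.
- apply IH with (Derive f); auto. intro x; apply Derive_ext; auto.
Qed.

Lemma Ck_down n : forall f, Ck (S n) f -> Ck n f.
Proof.
induction n as [|n IH]; simpl; [auto|].
intros f [H1 H2]; split; auto.
Qed.

Lemma Ck_le n m f : (m <= n)%nat -> Ck n f -> Ck m f.
Proof. induction 1 as [|n' Hle IHle]; auto. intro H; apply IHle, Ck_down; auto. Qed.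

Lemma is_derive_eq (f:R->R) (x l lp : R) : is_derive f x l -> @eq R l lp -> is_derive f x lp.
Proof. intros H ->; auto. Qed.

Lemma Ck_intro n f f' : (forall x, is_derive f x (f' x)) -> Ck n f' -> Ck (S n) f.
Proof.
intros D H; split.
- intro x; eexists; apply D.
- apply Ck_ext with f'; auto. intro x; symmetry; apply is_derive_unique; auto.
Qed.

Lemma Ck_der n f : Ck (S n) f -> Ck n (Derive f).
Proof. intros [_ H]; exact H. Qed.

Lemma Ck_isder f : Ck 1 f -> forall x, is_derive f x (Derive f x).
Proof. intros [H _] x; apply Derive_correct; auto. Qed.

Lemma Ck_cont f : Ck 1 f -> forall x, continuous f x.
Proof. intros [H _] x; apply (ex_derive_continuous (K:=R_AbsRing) (V:=R_NormedModule)); auto. Qed.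

Lemma Ck_const n c : Ck n (fun _ => c).
Proof.
induction n; simpl; auto. apply (Ck_intro n _ (fun _ => 0)).
- intro; apply is_derive_Reals; apply derivable_pt_lim_const.
- clear IHn; induction n; simpl; auto. apply (Ck_intro n _ (fun _ => 0)); auto.
  intro; apply is_derive_Reals; apply derivable_pt_lim_const.
Qed.

Lemma Ck_plus n : forall f g, Ck n f -> Ck n g -> Ck n (fun x => f x + g x).
Proof.
induction n as [|n IH]; simpl; auto.
intros f g Hf Hg.
apply (Ck_intro n _ (fun x => Derive f x + Derive g x)).
- intro x; apply isd_plus; apply Derive_correct; [apply Hf|apply Hg].
- apply IH; [apply Hf|apply Hg].
Qed.

Lemma Ck_opp n : forall f, Ck n f -> Ck n (fun x => - f x).
Proof.
induction n as [|n IH]; simpl; auto.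
intros f Hf.
apply (Ck_intro n _ (fun x => - Derive f x)).
- intro x; apply isd_opp; apply Derive_correct; apply Hf.
- apply IH; apply Hf.
Qed.

Lemma Ck_mult n : forall f g, Ck n f -> Ck n g -> Ck n (fun x => f x * g x).
Proof.
induction n as [|n IH]; simpl; auto.
intros f g Hf Hg.
apply (Ck_intro n _ (fun x => Derive f x * g x + f x * Derive g x)).
- intro x; apply isd_mult; apply Derive_correct; [apply Hf|apply Hg].
- destruct Hf as [Hf1 Hf2], Hg as [Hg1 Hg2].
  apply Ck_plus; apply IH; auto; apply Ck_down; split; auto.
Qed.

Lemma Ck_minus n f g : Ck n f -> Ck n g -> Ck n (fun x => f x - g x).
Proof. intros; apply Ck_plus; auto; apply Ck_opp; auto. Qed.

Lemma Ck_scal n c f : Ck n f -> Ck n (fun x => c * f x).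
Proof. intros; apply Ck_mult; auto; apply Ck_const. Qed.

Lemma Ck_id n : Ck n (fun x => x).
Proof.
destruct n; simpl; auto. apply (Ck_intro n _ (fun _ => 1)).
- intro; apply is_derive_Reals; apply derivable_pt_lim_id.
- apply Ck_const.
Qed.

Lemma Ck_comp n : forall f g, Ck n f -> Ck n g -> Ck n (fun x => f (g x)).
Proof.
induction n as [|n IH]; simpl; auto.
intros f g Hf Hg.
apply (Ck_intro n _ (fun x => Derive g x * Derive f (g x))).
- intro x. apply isd_comp; apply Derive_correct; [apply Hf|apply Hg].
- destruct Hf as [Hf1 Hf2], Hg as [Hg1 Hg2].
  apply Ck_mult; [auto|]. apply IH; [auto|]. apply Ck_down; split; auto.
Qed.

Lemma Ck_inv n : forall f, (forall x, f x <> 0) -> Ck n f -> Ck n (fun x => / f x).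
Proof.
induction n as [|n IH]; simpl; auto.
intros f Hn Hf.
apply (Ck_intro n _ (fun x => - Derive f x * (/ f x * / f x))).
- intro x. assert (D := is_derive_inv f x (Derive f x) (Derive_correct _ _ (proj1 Hf x)) (Hn x)).
  apply (is_derive_eq _ _ _ _ D). assert (E: forall y:R, f y <> 0 -> - Derive f y / f y ^ 2 = - Derive f y * (/ f y * / f y)) by (intros y Hy; field; auto). apply E; auto.
- apply Ck_mult. apply Ck_opp; apply Hf.
  assert (Ck n (fun x => / f x)) by (apply IH; auto; apply Ck_down; split; apply Hf).
  apply Ck_mult; auto.
Qed.

Lemma Ck_div n f g : (forall x, g x <> 0) -> Ck n f -> Ck n g -> Ck n (fun x => f x / g x).
Proof. intros; apply Ck_mult; auto; apply Ck_inv; auto. Qed.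

Lemma Ck_sqrt n : forall f, (forall x, 0 < f x) -> Ck n f -> Ck n (fun x => sqrt (f x)).
Proof.
induction n as [|n IH]; simpl; auto.
intros f Hp Hf.
apply (Ck_intro n _ (fun x => Derive f x * / (2 * sqrt (f x)))).
- intro x. assert (D := is_derive_sqrt f x (Derive f x) (Derive_correct _ _ (proj1 Hf x)) (Hp x)).
  apply (is_derive_eq _ _ _ _ D). reflexivity.
- apply Ck_mult. apply Hf.
  apply Ck_inv. intro x; generalize (sqrt_lt_R0 _ (Hp x)); lra.
  apply Ck_scal. apply IH; auto; apply Ck_down; split; apply Hf.
Qed.

Lemma Ck_exp n : forall f, Ck n f -> Ck n (fun x => exp (f x)).
Proof.
induction n as [|n IH]; simpl; auto.
intros f Hf.
apply (Ck_intro n _ (fun x => Derive f x * exp (f x))).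
- intro x. apply isd_comp.
  + apply is_derive_Reals; apply derivable_pt_lim_exp.
  + apply Derive_correct; apply Hf.
- apply Ck_mult. apply Hf. apply IH; apply Ck_down; split; apply Hf.
Qed.

Lemma Derive_n_S f m t : Derive_n f (S m) t = Derive_n (Derive f) m t.
Proof. rewrite <- Nat.add_1_r. rewrite <- Derive_n_comp. reflexivity. Qed.

Lemma Cinf_smooth f : Cinf f -> forall n x, ex_derive_n f n x.
Proof.
intros H n. revert f H. induction n as [|n IH]; intros f H x; simpl; auto.
destruct n. simpl. apply (H 1%nat).
assert (Cinf (Derive f)) by (intro m; apply Ck_der, H).
generalize (IH _ H0 x); simpl. intro E.
apply ex_derive_ext with (Derive_n (Derive f) n); auto.
intro t. rewrite <- Derive_n_S. reflexivity.
Qed.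

Lemma smooth_Cinf f : (forall n x, ex_derive_n f n x) -> Cinf f.
Proof.
intros H n. revert f H. induction n as [|n IH]; intros f H; simpl; auto.
split. intro x; apply (H 1%nat).
apply IH. intros m x. destruct m; simpl; auto.
apply ex_derive_ext with (Derive_n f (S m)).
intro t. rewrite Derive_n_S. reflexivity.
apply (H (S (S m))).
Qed.

Fixpoint peval (l : list R) (y : R) : R :=
  match l with nil => 0 | c :: l' => c + y * peval l' y end.
Fixpoint padd (l m : list R) : list R :=
  match l, m with
  | nil, _ => m
  | _, nil => l
  | a :: l', b :: m' => (a + b) :: padd l' m'
  end.
Fixpoint pder (l : list R) : list R :=
  match l with nil => nil | c :: l' => padd l' (0 :: pder l') end.
Definition pscal (c : R) (l : list R) := List.map (Rmult c) l.
Definition pnext (l : list R) := 0 :: 0 :: padd l (pscal (-1) (pder l)).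

Lemma peval_padd l : forall m y, peval (padd l m) y = peval l y + peval m y.
Proof.
induction l as [|a l IH]; intros m y; simpl. ring.
destruct m as [|b m]; simpl. ring. rewrite IH. ring.
Qed.
Lemma peval_pscal c l y : peval (pscal c l) y = c * peval l y.
Proof. induction l; simpl. ring. rewrite IHl. ring. Qed.

Lemma peval_der l y : is_derive (peval l) y (peval (pder l) y).
Proof.
induction l as [|c l IH]; simpl.
- apply isd_const.
- rewrite peval_padd; simpl.
  apply (is_derive_eq _ _ _ _ (isd_plus _ _ _ _ _ (isd_const c y) (isd_mult _ _ _ _ _ (isd_id y) IH))).
  ring.
Qed.

Fixpoint pabs (l : list R) : R := match l with nil => 0 | c :: l' => Rabs c + pabs l' end.
Lemma pabs_pos l : 0 <= pabs l.
Proof. induction l; simpl. lra. generalize (Rabs_pos a); lra. Qed.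

Lemma peval_bound l y : 0 <= y -> Rabs (peval l y) <= pabs l * (1 + y) ^ Datatypes.length l.
Proof.
intro Hy. induction l as [|c l IH]; simpl. rewrite Rabs_R0; lra.
eapply Rle_trans. apply Rabs_triang. rewrite Rabs_mult, (Rabs_right y) by lra.
assert (1 <= (1+y)^Datatypes.length l) by (apply pow_R1_Rle; lra).
generalize (Rabs_pos c) (pabs_pos l); intros.
assert (y * Rabs (peval l y) <= y * (pabs l * (1+y)^Datatypes.length l)) by (apply Rmult_le_compat_l; lra).
assert (Rabs c <= Rabs c * (1+y)^Datatypes.length l) by (rewrite <- (Rmult_1_r (Rabs c)) at 1; apply Rmult_le_compat_l; lra).
assert (0 <= pabs l * (1+y)^Datatypes.length l) by (apply Rmult_le_pos; lra).
nra.
Qed.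

Lemma exp_pow_nat (n : nat) u : exp (INR n * u) = exp u ^ n.
Proof.
induction n. simpl. rewrite Rmult_0_l, exp_0; auto.
rewrite S_INR, Rmult_plus_distr_r, Rmult_1_l, exp_plus, IHn. simpl. ring.
Qed.

Lemma exp_ge_pow (N : nat) z : (0 < N)%nat -> 0 <= z -> (z / INR N) ^ N <= exp z.
Proof.
intros HN Hz. assert (HN' : 0 < INR N) by (apply lt_0_INR; auto).
replace z with (INR N * (z / INR N)) at 2 by (field; lra).
rewrite exp_pow_nat. apply pow_incr. split.
- apply Rmult_le_pos; auto. left; apply Rinv_0_lt_compat; auto.
- destruct (Req_dec z 0) as [E|E]. subst z. unfold Rdiv; rewrite Rmult_0_l, exp_0; lra.
  left. assert (0 < z / INR N) by (apply Rmult_lt_0_compat; [lra| apply Rinv_0_lt_compat; auto]).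
  assert (HH := exp_ineq1 (z / INR N) ltac:(lra)); lra.
Qed.

Lemma decay k M eps : 0 < eps -> 0 <= M ->
  exists Y, 0 < Y /\ forall y, Y <= y -> M * (1 + y) ^ k * y * exp (- y) < eps.
Proof.
intros He HM.
set (N := (k + 2)%nat).
set (C := M * exp 1 * (INR N) ^ N).
assert (HNpos : 0 < INR N) by (apply lt_0_INR; unfold N; lia).
assert (HC : 0 <= C) by (unfold C; apply Rmult_le_pos; [apply Rmult_le_pos; [auto|left; apply exp_pos]|apply pow_le; lra]).
exists (C / eps + 1). split. assert (0 <= C/eps) by (apply Rmult_le_pos; auto; left; apply Rinv_0_lt_compat; auto). lra.
intros y Hy.
assert (0 <= C/eps) by (apply Rmult_le_pos; auto; left; apply Rinv_0_lt_compat; auto).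
set (z := 1 + y).
assert (Hz : 1 <= z) by (unfold z; lra).
assert (Hyz : y <= z) by (unfold z; lra).
assert (E1 : exp (- y) = exp 1 * / exp z) by (unfold z; rewrite <- exp_Ropp, <- exp_plus; f_equal; ring).
assert (E2 : (z / INR N) ^ N <= exp z) by (apply exp_ge_pow; [unfold N; lia|lra]).
assert (Ez : 0 < exp z) by apply exp_pos.
assert (Hzp : 0 < (z / INR N) ^ N) by (apply pow_lt; apply Rmult_lt_0_compat; [lra|apply Rinv_0_lt_compat; auto]).
assert (B1 : M * (1 + y) ^ k * y * exp (- y) <= M * exp 1 * (z ^ (k+1) / exp z)).
{ rewrite E1. fold z. rewrite pow_add. simpl pow at 2.
  assert (0 <= z ^ k) by (apply pow_le; lra).
  assert (0 <= M * exp 1) by (apply Rmult_le_pos; auto; left; apply exp_pos).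
  assert (0 < / exp z) by (apply Rinv_0_lt_compat; auto).
  unfold Rdiv.
  assert (0 <= y) by lra.
  assert (z^k * y <= z^k * (z*1)) by (apply Rmult_le_compat_l; lra).
  replace (M * z ^ k * y * (exp 1 * / exp z)) with ((M * exp 1) * (z^k * y) * / exp z) by ring.
  replace (M * exp 1 * (z ^ k * z ^ 1 * / exp z)) with ((M * exp 1) * (z^k * (z*1)) * / exp z) by ring.
  apply Rmult_le_compat_r. lra. apply Rmult_le_compat_l; auto. }
assert (B2 : z ^ (k+1) / exp z <= (INR N)^N / z).
{ apply Rle_trans with (z ^ (k+1) / (z / INR N) ^ N).
  - unfold Rdiv. apply Rmult_le_compat_l. apply pow_le; lra.
    apply Rinv_le_contravar; auto.
  - unfold Rdiv. rewrite Rpow_mult_distr, pow_inv.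
    assert (EN: z ^ N = z^(k+1) * z) by (unfold N; replace (k+2)%nat with (S(k+1)) by lia; simpl; ring).
    rewrite EN.
    assert (z^(k+1) <> 0) by (apply pow_nonzero; lra).
    assert (INR N ^ N <> 0) by (apply pow_nonzero; lra).
    right. field. repeat split; try lra; auto. }
assert (B3 : M * exp 1 * ((INR N)^N / z) < eps).
{ replace (M * exp 1 * ((INR N)^N / z)) with (C / z) by (unfold C; field; lra).
  apply Rmult_lt_reg_r with z. lra. unfold Rdiv. rewrite Rmult_assoc, Rinv_l, Rmult_1_r by lra.
  assert (C < eps * z).
  { apply Rmult_lt_reg_r with (/ eps). apply Rinv_0_lt_compat; auto.
    replace (eps * z * / eps) with z by (field; lra). unfold Rdiv in *. lra. }
  lra. }
assert (0 <= M * exp 1) by (apply Rmult_le_pos; auto; left; apply exp_pos).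
assert (M * exp 1 * (z ^ (k + 1) / exp z) <= M * exp 1 * ((INR N)^N / z)) by (apply Rmult_le_compat_l; auto).
unfold z in *; lra.
Qed.

Definition Hf (l : list R) (x : R) : R :=
  if Rlt_dec 0 x then peval l (/ x) * exp (- / x) else 0.

Lemma isd_ext_loc_R (f g : R -> R) x l : locally x (fun t => f t = g t) -> is_derive f x l -> is_derive g x l.
Proof. intros; eapply is_derive_ext_loc; eauto. Qed.

Lemma isd_inv (x : R) : x <> 0 -> is_derive (fun y => / y) x (- / (x * x)).
Proof.
intro Hx. assert (D := is_derive_inv (fun y => y) x 1 (isd_id x) Hx).
apply (is_derive_eq _ _ _ _ D). field; auto.
Qed.

Lemma Hf_der l x : is_derive (Hf l) x (Hf (pnext l) x).
Proof.
destruct (Rtotal_order x 0) as [Hx|[Hx|Hx]].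
-
  assert (E : Hf (pnext l) x = 0) by (unfold Hf; destruct (Rlt_dec 0 x); [lra|auto]).
  rewrite E. apply isd_ext_loc_R with (fun _ => 0); [|apply isd_const].
  apply locally_interval with m_infty 0; simpl; auto.
  intros y _ Hy. unfold Hf. destruct (Rlt_dec 0 y); [lra|auto].
- subst x. assert (E : Hf (pnext l) 0 = 0) by (unfold Hf; destruct (Rlt_dec 0 0); [lra|auto]).
  rewrite E. apply is_derive_Reals. intros eps He.
  destruct (decay (Datatypes.length l) (pabs l) eps He (pabs_pos l)) as [Y [HY HYb]].
  assert (Hd : 0 < / Y) by (apply Rinv_0_lt_compat; auto).
  exists (mkposreal _ Hd). simpl. intros h Hh Hhd.
  replace (Hf l 0) with 0 by (unfold Hf; destruct (Rlt_dec 0 0); [lra|auto]).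
  rewrite Rplus_0_l, Rminus_0_r, Rminus_0_r.
  unfold Hf. destruct (Rlt_dec 0 h) as [Hp|Hn].
  + rewrite Rabs_right in Hhd by lra.
    set (y := / h).
    assert (Hy : Y <= y).
    { unfold y. rewrite <- (Rinv_inv Y). apply Rinv_le_contravar; lra. }
    assert (Hy0 : 0 < y) by (unfold y; apply Rinv_0_lt_compat; auto).
    replace (peval l y * exp (- y) / h) with (peval l y * exp (- y) * y) by (unfold y; field; lra).
    rewrite Rabs_mult, Rabs_mult, (Rabs_right (exp _)), (Rabs_right y) by (try left; try apply exp_pos; lra).
    assert (B := peval_bound l y (Rlt_le _ _ Hy0)).
    assert (0 < exp (- y)) by apply exp_pos.
    assert (Rabs (peval l y) * exp (-y) * y <= pabs l * (1 + y) ^ Datatypes.length l * exp (-y) * y).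
    { apply Rmult_le_compat_r; [lra|]. apply Rmult_le_compat_r; lra. }
    assert (pabs l * (1 + y) ^ Datatypes.length l * exp (-y) * y = pabs l * (1 + y) ^ Datatypes.length l * y * exp (- y)) by ring.
    specialize (HYb y Hy). lra.
  + unfold Rdiv. rewrite Rmult_0_l, Rabs_R0. auto.
- assert (E : Hf (pnext l) x = peval (pnext l) (/ x) * exp (- / x)) by (unfold Hf; destruct (Rlt_dec 0 x); [auto|lra]).
  rewrite E. apply isd_ext_loc_R with (fun y => peval l (/ y) * exp (- / y)).
  + apply locally_interval with 0 p_infty; simpl; auto.
    intros y Hy _. unfold Hf. destruct (Rlt_dec 0 y); [auto|lra].
  + assert (Hx0 : x <> 0) by lra.
    assert (D1 := isd_comp (peval l) (fun y => / y) x _ _ (peval_der l (/ x)) (isd_inv x Hx0)).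
    assert (D2 := isd_comp exp (fun y => - / y) x _ _ (proj2 (is_derive_Reals _ _ _) (derivable_pt_lim_exp (- / x))) (isd_opp _ _ _ (isd_inv x Hx0))).
    assert (D := isd_mult _ _ _ _ _ D1 D2).
    apply (is_derive_eq _ _ _ _ D).
    unfold pnext. simpl. rewrite peval_padd, peval_pscal. field. auto.
Qed.

Lemma Hf_Ck n : forall l, Ck n (Hf l).
Proof.
induction n as [|n IH]; intro l; simpl; auto.
apply (Ck_intro n _ (Hf (pnext l))); auto. intro; apply Hf_der.
Qed.

Definition bump (x : R) : R := Hf (1 :: nil) x.

Lemma bump_Cinf : Cinf bump.
Proof. intro n. apply Hf_Ck. Qed.

Lemma bump_pos x : 0 < x -> 0 < bump x.
Proof. intro H. unfold bump, Hf. destruct (Rlt_dec 0 x); [|lra]. simpl. rewrite Rmult_0_r, Rplus_0_r, Rmult_1_l. apply exp_pos. Qed.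

Lemma bump_zero x : x <= 0 -> bump x = 0.
Proof. intro H. unfold bump, Hf. destruct (Rlt_dec 0 x); [lra|auto]. Qed.

Lemma bump_nonneg x : 0 <= bump x.
Proof. destruct (Rlt_dec 0 x). left; apply bump_pos; auto. rewrite bump_zero; lra. Qed.

Definition step (x : R) : R := bump x / (bump x + bump (1 - x)).

Lemma step_den x : 0 < bump x + bump (1 - x).
Proof.
destruct (Rlt_dec 0 x). generalize (bump_pos x r) (bump_nonneg (1-x)); lra.
generalize (bump_pos (1-x) ltac:(lra)) (bump_nonneg x); lra.
Qed.

Lemma step_Cinf : Cinf step.
Proof.
intro n. unfold step. apply Ck_div.
- intro x; generalize (step_den x); lra.
- apply bump_Cinf.
- apply Ck_plus. apply bump_Cinf. apply Ck_comp. apply bump_Cinf. apply Ck_minus. apply Ck_const. apply Ck_id.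
Qed.

Lemma step_0 x : x <= 0 -> step x = 0.
Proof. intro H. unfold step. rewrite bump_zero by auto. unfold Rdiv; ring. Qed.

Lemma step_1 x : 1 <= x -> step x = 1.
Proof. intro H. unfold step. rewrite (bump_zero (1-x)) by lra. rewrite Rplus_0_r. field.
generalize (bump_pos x ltac:(lra)); lra. Qed.

Lemma step_range x : 0 <= step x <= 1.
Proof.
unfold step. generalize (step_den x) (bump_nonneg x) (bump_nonneg (1-x)); intros.
split. apply Rmult_le_pos; auto. left; apply Rinv_0_lt_compat; auto.
apply Rmult_le_reg_r with (bump x + bump (1-x)); auto. unfold Rdiv. rewrite Rmult_assoc, Rinv_l; lra.
Qed.

Lemma Cinf_der f : Cinf f -> Cinf (Derive f).
Proof. intros H n. apply Ck_der, H. Qed.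

Lemma Cinf_isder f : Cinf f -> forall x, is_derive f x (Derive f x).
Proof. intros H; apply Ck_isder, H. Qed.

Lemma Cinf_cont f : Cinf f -> forall x, continuous f x.
Proof. intros H; apply Ck_cont, H. Qed.

Lemma strict_incr s : Cinf s -> (forall x, 0 < Derive s x) -> forall x y, x < y -> s x < s y.
Proof.
intros Hs Hp x y Hxy.
apply (incr_function s m_infty p_infty (Derive s)); simpl; auto.
intros; apply Cinf_isder; auto.
intros; apply Hp.
Qed.

Lemma inverse_Cinf (s : R -> R) : Cinf s -> (forall x, 0 < Derive s x) -> (forall y, exists x, s x = y) ->
  { g : R -> R | (forall y, s (g y) = y) /\ (forall x, g (s x) = x) /\ Cinf g /\
      forall y, is_derive g y (/ Derive s (g y)) }.
Proof.
intros Hs Hp Hsurj.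
exists (fun y => proj1_sig (constructive_indefinite_description _ (Hsurj y))).
set (g := fun y => proj1_sig (constructive_indefinite_description _ (Hsurj y))).
assert (G1 : forall y, s (g y) = y).
{ intro y. unfold g. destruct (constructive_indefinite_description _ (Hsurj y)); simpl; auto. }
assert (Inj : forall a b, s a = s b -> a = b).
{ intros a b E. destruct (Rtotal_order a b) as [H|[H|H]]; auto.
  generalize (strict_incr s Hs Hp _ _ H); lra. generalize (strict_incr s Hs Hp _ _ H); lra. }
assert (G2 : forall x, g (s x) = x) by (intro x; apply Inj; rewrite G1; auto).
assert (Gm : forall a b, a <= b -> g a <= g b).
{ intros a b H. destruct (Rle_dec (g a) (g b)); auto.
  assert (g b < g a) by lra. generalize (strict_incr s Hs Hp _ _ H0). rewrite !G1. lra. }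
assert (D : forall y, is_derive g y (/ Derive s (g y))).
{ intro y.
  assert (Prf : forall a, g (y-1) <= a <= g (y+1) -> derivable_pt s a).
  { intros a _. apply ex_derive_Reals_0. eexists; apply Cinf_isder; auto. }
  assert (Cg : continuity_pt g y).
  { apply (Ranalysis5.continuity_pt_recip_interv s g (g y - 1) (g y + 1)).
    - lra.
    - intros; apply strict_incr; auto.
    - intros; unfold comp, id; auto.
    - intros x H1 H2. split.
      + rewrite <- (G2 (g y - 1)). apply Gm; auto.
      + rewrite <- (G2 (g y + 1)). apply Gm; auto.
    - intros; apply continuity_pt_filterlim. apply Cinf_cont; auto.
    - assert (s (g y - 1) < s (g y)) by (apply strict_incr; auto; lra).
      assert (s (g y) < s (g y + 1)) by (apply strict_incr; auto; lra).
      rewrite G1 in *; lra. }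
  assert (Hi : g (y-1) <= g y <= g (y+1)) by (split; apply Gm; lra).
  assert (L := Ranalysis5.derivable_pt_lim_recip_interv s g (y-1) (y+1) y Prf Cg ltac:(lra) ltac:(lra) Hi
    ltac:(intros; unfold comp, id; auto)).
  rewrite Derive_Reals in L.
  apply is_derive_Reals. replace (/ Derive s (g y)) with (1 / Derive s (g y)) by (unfold Rdiv; ring).
  apply L. generalize (Hp (g y)); lra. }
split; auto. split; auto. split; auto.
intro n. induction n as [|n IH]; simpl; auto.
apply (Ck_intro n _ (fun y => / Derive s (g y))); auto.
apply Ck_inv. intro x; generalize (Hp (g x)); lra.
apply Ck_comp; auto. apply Cinf_der; auto.
Qed.

Lemma prim_der f a : Cinf f -> forall x, is_derive (fun y => RInt f a y) x (f x).
Proof.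
intros Hf x. apply (is_derive_RInt f (fun y => RInt f a y) a x).
- apply filter_forall. intro b. apply (RInt_correct (V:=R_CompleteNormedModule)). apply (ex_RInt_continuous (V:=R_CompleteNormedModule)).
  intros; apply Cinf_cont; auto.
- apply Cinf_cont; auto.
Qed.

Lemma prim_Cinf f a : Cinf f -> Cinf (fun y => RInt f a y).
Proof.
intros Hf n. destruct n; simpl; auto.
apply (Ck_intro n _ f); auto. apply prim_der; auto.
Qed.

Lemma cont_plusR {U : UniformSpace} (f g : U -> R) x : continuous f x -> continuous g x -> continuous (fun y => f y + g y) x.
Proof. intros; apply (continuous_plus f g x); auto. Qed.
Lemma cont_multR {U : UniformSpace} (f g : U -> R) x : continuous f x -> continuous g x -> continuous (fun y => f y * g y) x.
Proof. intros; apply (continuous_mult f g x); auto. Qed.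

Lemma cont_lin (a b c : R) (z : R * R) : continuous (fun w : R * R => a * fst w + b * snd w + c) z.
Proof.
destruct z as [u v].
apply cont_plusR. apply cont_plusR.
apply cont_multR. apply continuous_const. apply continuous_fst.
apply cont_multR. apply continuous_const. apply continuous_snd.
apply continuous_const.
Qed.

Lemma Cinf_Dn_der f n x : Cinf f -> is_derive (Derive_n f n) x (Derive_n f (S n) x).
Proof.
intro H. simpl. apply Derive_correct.
apply (Cinf_smooth f H (S n) x).
Qed.

Lemma Cinf_Dn_cont f n x : Cinf f -> continuous (Derive_n f n) x.
Proof.
intro H. apply (ex_derive_continuous (K:=R_AbsRing) (V:=R_NormedModule)).
eexists; apply Cinf_Dn_der; auto.
Qed.

Lemma isd_lin_t (a b c x t : R) : is_derive (fun s => a*s + b*x + c) t a.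
Proof. apply (is_derive_eq _ _ _ _ (isd_plus _ _ _ _ _ (isd_plus _ _ _ _ _ (isd_mult _ _ _ _ _ (isd_const a t) (isd_id t)) (isd_const (b*x) t)) (isd_const c t))). ring. Qed.
Lemma isd_lin_x (a b c t x : R) : is_derive (fun s => a*t + b*s + c) x b.
Proof. apply (is_derive_eq _ _ _ _ (isd_plus _ _ _ _ _ (isd_plus _ _ _ _ _ (isd_const (a*t) x) (isd_mult _ _ _ _ _ (isd_const b x) (isd_id x))) (isd_const c x))). ring. Qed.

Section S2.
Variables (f1 f2 : R -> R) (a1 b1 c1 a2 b2 c2 k0 : R).
Hypothesis (H1 : Cinf f1) (H2 : Cinf f2).
Definition G2 := fun t x => f1 (a1 * t + b1 * x + c1) + f2 (a2 * t + b2 * x + c2) + k0.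

Lemma Dlist_G2 l : exists k1 k2 k3, Dlist l G2 = fun t x =>
  k1 * Derive_n f1 (Datatypes.length l) (a1 * t + b1 * x + c1) + k2 * Derive_n f2 (Datatypes.length l) (a2 * t + b2 * x + c2) + k3.
Proof.
induction l as [|b l IH].
- exists 1, 1, k0. simpl. unfold G2. apply functional_extensionality; intro t; apply functional_extensionality; intro x. ring.
- destruct IH as [k1 [k2 [k3 E]]]. simpl. rewrite E. destruct b.
  + exists (k1 * a1), (k2 * a2), 0. unfold dT.
    apply functional_extensionality; intro t; apply functional_extensionality; intro x.
    apply is_derive_unique.
    set (n := Datatypes.length l).
    assert (D1 := isd_comp (Derive_n f1 n) (fun s => a1 * s + b1 * x + c1) t _ a1 (Cinf_Dn_der f1 n _ H1)
      (isd_lin_t a1 b1 c1 x t)).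
    assert (D2 := isd_comp (Derive_n f2 n) (fun s => a2 * s + b2 * x + c2) t _ a2 (Cinf_Dn_der f2 n _ H2)
      (isd_lin_t a2 b2 c2 x t)).
    assert (D := isd_plus _ _ _ _ _ (isd_plus _ _ _ _ _ (isd_mult _ _ _ _ _ (isd_const k1 t) D1) (isd_mult _ _ _ _ _ (isd_const k2 t) D2)) (isd_const k3 t)).
    apply (is_derive_eq _ _ _ _ D). simpl. ring.
  + exists (k1 * b1), (k2 * b2), 0. unfold dX.
    apply functional_extensionality; intro t; apply functional_extensionality; intro x.
    apply is_derive_unique.
    set (n := Datatypes.length l).
    assert (D1 := isd_comp (Derive_n f1 n) (fun s => a1 * t + b1 * s + c1) x _ b1 (Cinf_Dn_der f1 n _ H1)
      (isd_lin_x a1 b1 c1 t x)).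
    assert (D2 := isd_comp (Derive_n f2 n) (fun s => a2 * t + b2 * s + c2) x _ b2 (Cinf_Dn_der f2 n _ H2)
      (isd_lin_x a2 b2 c2 t x)).
    assert (D := isd_plus _ _ _ _ _ (isd_plus _ _ _ _ _ (isd_mult _ _ _ _ _ (isd_const k1 x) D1) (isd_mult _ _ _ _ _ (isd_const k2 x) D2)) (isd_const k3 x)).
    apply (is_derive_eq _ _ _ _ D). simpl. ring.
Qed.

Lemma G2_smooth : smooth2 G2.
Proof.
intro l. destruct (Dlist_G2 l) as [k1 [k2 [k3 E]]]. rewrite E. set (n := Datatypes.length l). split.
- intros t x. split.
  + eexists. 
    assert (D1 := isd_comp (Derive_n f1 n) (fun s => a1 * s + b1 * x + c1) t _ a1 (Cinf_Dn_der f1 n _ H1)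
      (isd_lin_t a1 b1 c1 x t)).
    assert (D2 := isd_comp (Derive_n f2 n) (fun s => a2 * s + b2 * x + c2) t _ a2 (Cinf_Dn_der f2 n _ H2)
      (isd_lin_t a2 b2 c2 x t)).
    exact (isd_plus _ _ _ _ _ (isd_plus _ _ _ _ _ (isd_mult _ _ _ _ _ (isd_const k1 t) D1) (isd_mult _ _ _ _ _ (isd_const k2 t) D2)) (isd_const k3 t)).
  + eexists.
    assert (D1 := isd_comp (Derive_n f1 n) (fun s => a1 * t + b1 * s + c1) x _ b1 (Cinf_Dn_der f1 n _ H1)
      (isd_lin_x a1 b1 c1 t x)).
    assert (D2 := isd_comp (Derive_n f2 n) (fun s => a2 * t + b2 * s + c2) x _ b2 (Cinf_Dn_der f2 n _ H2)
      (isd_lin_x a2 b2 c2 t x)).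
    exact (isd_plus _ _ _ _ _ (isd_plus _ _ _ _ _ (isd_mult _ _ _ _ _ (isd_const k1 x) D1) (isd_mult _ _ _ _ _ (isd_const k2 x) D2)) (isd_const k3 x)).
- intro z. apply cont_plusR. apply cont_plusR.
  + apply cont_multR. apply continuous_const.
    apply (continuous_comp (fun w : R*R => a1 * fst w + b1 * snd w + c1) (Derive_n f1 n)).
    apply cont_lin. apply Cinf_Dn_cont; auto.
  + apply cont_multR. apply continuous_const.
    apply (continuous_comp (fun w : R*R => a2 * fst w + b2 * snd w + c2) (Derive_n f2 n)).
    apply cont_lin. apply Cinf_Dn_cont; auto.
  + apply continuous_const.
Qed.
End S2.

Lemma mvt_der (c w : R -> R) : (forall s, is_derive c s (w s)) ->
  forall x y, x <= y -> exists xi, x <= xi <= y /\ c y - c x = w xi * (y - x).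
Proof.
intros D x y Hxy.
destruct (MVT_gen c x y w) as [xi [H1 H2]].
- intros; apply D.
- intros; apply continuity_pt_filterlim.
  apply (ex_derive_continuous (K:=R_AbsRing) (V:=R_NormedModule)). eexists; apply D.
- rewrite Rmin_left, Rmax_right in H1 by auto. exists xi; split; auto.
Qed.

Lemma clamp_exists lo hi d : lo < hi -> 0 < d ->
  exists c w : R -> R, Cinf c /\ Cinf w /\ (forall s, is_derive c s (w s)) /\
   (forall s, 0 <= w s <= 1) /\
   (forall s, lo - d/2 <= s <= hi + d/2 -> w s = 1 /\ c s = s) /\
   (forall s, s <= lo - d \/ hi + d <= s -> w s = 0) /\
   (forall s, lo - d <= c s <= hi + d).
Proof.
intros Hlh Hd.
set (w := fun s => step ((s - lo + d) * (2 / d)) * step ((hi + d - s) * (2 / d))).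
assert (Wc : Cinf w).
{ intro n. unfold w. apply Ck_mult; apply Ck_comp; try apply step_Cinf.
  apply Ck_mult. apply Ck_plus. apply Ck_minus. apply Ck_id. apply Ck_const. apply Ck_const. apply Ck_const.
  apply Ck_mult. apply Ck_minus. apply Ck_const. apply Ck_id. apply Ck_const. }
set (c := fun s => lo + RInt w lo s).
assert (Dc : forall s, is_derive c s (w s)).
{ intro s. unfold c. apply (is_derive_eq _ _ _ _ (isd_plus _ _ _ _ _ (isd_const lo s) (prim_der w lo Wc s))). ring. }
assert (Wr : forall s, 0 <= w s <= 1).
{ intro s. unfold w. generalize (step_range ((s - lo + d) * (2 / d))) (step_range ((hi + d - s) * (2 / d))). intros. split.
  apply Rmult_le_pos; lra. rewrite <- (Rmult_1_r 1). apply Rmult_le_compat; lra. }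
assert (Hd2 : 0 < 2 / d) by (apply Rmult_lt_0_compat; [lra|apply Rinv_0_lt_compat; auto]).
assert (W1 : forall s, lo - d/2 <= s <= hi + d/2 -> w s = 1).
{ intros s Hs. unfold w. rewrite !step_1. ring.
  all: replace 1 with ((d/2) * (2/d)) by (field; lra); apply Rmult_le_compat_r; lra. }
assert (W0 : forall s, s <= lo - d \/ hi + d <= s -> w s = 0).
{ intros s [Hs|Hs]; unfold w.
  rewrite (step_0 ((s - lo + d) * (2 / d))). ring. assert (s - lo + d <= 0) by lra. nra.
  rewrite (step_0 ((hi + d - s) * (2 / d))). ring. assert (hi + d - s <= 0) by lra. nra. }
assert (C0 : c lo = lo) by (unfold c; rewrite RInt_point; unfold zero; simpl; ring).
assert (Mono : forall x y, x <= y -> 0 <= c y - c x <= y - x).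
{ intros x y Hxy. destruct (mvt_der c w Dc x y Hxy) as [xi [_ E]]. rewrite E.
  generalize (Wr xi); intros; split; nra. }
exists c, w. split.
{ unfold c. intro n. apply Ck_plus. apply Ck_const. apply prim_Cinf; auto. }
split; auto. split; auto. split; auto. split.
{ intros s Hs. split; auto.
  destruct (Rle_dec lo s).
  - destruct (mvt_der c w Dc lo s r) as [xi [Hxi E]]. rewrite W1 in E by lra. lra.
  - destruct (mvt_der c w Dc s lo ltac:(lra)) as [xi [Hxi E]]. rewrite W1 in E by lra. lra. }
split; auto.
intro s. split.
- destruct (Rle_dec (lo - d) s).
  + destruct (Rle_dec lo s). generalize (Mono lo s r0); lra. generalize (Mono s lo ltac:(lra)); lra.
  + destruct (mvt_der c w Dc s (lo - d) ltac:(lra)) as [xi [Hxi E]]. rewrite W0 in E by lra.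
    generalize (Mono (lo - d) lo ltac:(lra)); lra.
- destruct (Rle_dec s (hi + d)).
  + destruct (Rle_dec lo s). generalize (Mono lo s r0); lra. generalize (Mono s lo ltac:(lra)); lra.
  + destruct (mvt_der c w Dc (hi + d) s ltac:(lra)) as [xi [Hxi E]]. rewrite W0 in E by lra.
    generalize (Mono lo (hi + d) ltac:(lra)); lra.
Qed.

Section Data.
Variables (al be : R -> vec2).
Hypothesis (Hal : smooth_curve al) (Hbe : smooth_curve be).

Definition da1 := Derive (fun r => fst (al r)).
Definition da2 := Derive (fun r => snd (al r)).
Definition N0 u := norm2 (dcurve al u).
Definition U1 u := da1 u / N0 u.
Definition U2 u := da2 u / N0 u.
Definition bU u := fst (be u) * U1 u + snd (be u) * U2 u.
Definition bt1 u := fst (be u) - bU u * U1 u.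
Definition bt2 u := snd (be u) - bU u * U2 u.
Definition kt u := sqrt (1 - (bt1 u * bt1 u + bt2 u * bt2 u)).
Definition As1 u := bt1 u + kt u * U1 u.
Definition As2 u := bt2 u + kt u * U2 u.
Definition Bs1 u := - bt1 u + kt u * U1 u.
Definition Bs2 u := - bt2 u + kt u * U2 u.
Definition Fs u := N0 u / (2 * kt u).

Definition good u := 0 < N0 u /\ norm2 (be u) < 1.

Lemma N0_eq u : N0 u = sqrt (da1 u * da1 u + da2 u * da2 u).
Proof. reflexivity. Qed.

Lemma nb_sq u : norm2 (be u) ^ 2 = fst (be u) * fst (be u) + snd (be u) * snd (be u).
Proof. unfold norm2, dot2. rewrite pow2_sqrt; auto. nra. Qed.

Lemma sq_pos_of_sqrt x : 0 < sqrt x -> 0 < x.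
Proof. intro H. destruct (Rle_dec x 0). rewrite sqrt_neg_0 in H; lra. lra. Qed.

Lemma good_N0sq u : good u -> 0 < da1 u * da1 u + da2 u * da2 u.
Proof. intros [H _]. rewrite N0_eq in H. apply sq_pos_of_sqrt; auto. Qed.

Lemma U_unit u : good u -> U1 u * U1 u + U2 u * U2 u = 1.
Proof.
intro G. generalize (good_N0sq u G); intro P. destruct G as [G _].
unfold U1, U2. rewrite N0_eq in *.
assert (E : sqrt (da1 u * da1 u + da2 u * da2 u) * sqrt (da1 u * da1 u + da2 u * da2 u) = da1 u * da1 u + da2 u * da2 u) by (apply sqrt_sqrt; lra).
set (S := sqrt (da1 u * da1 u + da2 u * da2 u)) in *.
assert (S <> 0) by lra.
transitivity ((da1 u * da1 u + da2 u * da2 u) / (S * S)). field; auto.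
rewrite E. field; lra.
Qed.

Lemma bt_orth u : good u -> bt1 u * U1 u + bt2 u * U2 u = 0.
Proof. intro G. generalize (U_unit u G); intro E. unfold bt1, bt2.
replace ((fst (be u) - bU u * U1 u) * U1 u + (snd (be u) - bU u * U2 u) * U2 u)
  with ((fst (be u) * U1 u + snd (be u) * U2 u) - bU u * (U1 u * U1 u + U2 u * U2 u)) by ring.
rewrite E. unfold bU; ring. Qed.

Lemma bt_small u : good u -> bt1 u * bt1 u + bt2 u * bt2 u < 1.
Proof.
intro G. generalize (U_unit u G) (bt_orth u G); intros E O.
assert (Hb : fst (be u) * fst (be u) + snd (be u) * snd (be u) < 1).
{ destruct G as [_ G]. rewrite <- nb_sq. assert (0 <= norm2 (be u)) by apply sqrt_pos. nra. }
assert (bt1 u * bt1 u + bt2 u * bt2 u = fst (be u) * fst (be u) + snd (be u) * snd (be u) - bU u * bU u).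
{ unfold bt1, bt2.
  replace ((fst (be u) - bU u * U1 u) * (fst (be u) - bU u * U1 u) + (snd (be u) - bU u * U2 u) * (snd (be u) - bU u * U2 u))
   with (fst (be u) * fst (be u) + snd (be u) * snd (be u) - 2 * bU u * (fst (be u) * U1 u + snd (be u) * U2 u) + bU u * bU u * (U1 u * U1 u + U2 u * U2 u)) by ring.
  rewrite E. fold (bU u). ring. }
nra.
Qed.

Lemma kt_pos u : good u -> 0 < kt u.
Proof. intro G. unfold kt. apply sqrt_lt_R0. generalize (bt_small u G); lra. Qed.

Lemma kt_sq u : good u -> kt u * kt u = 1 - (bt1 u * bt1 u + bt2 u * bt2 u).
Proof. intro G. unfold kt. apply sqrt_sqrt. generalize (bt_small u G); lra. Qed.

Lemma As_unit u : good u -> As1 u * As1 u + As2 u * As2 u = 1.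
Proof.
intro G. generalize (U_unit u G) (bt_orth u G) (kt_sq u G); intros E O K.
unfold As1, As2.
replace ((bt1 u + kt u * U1 u) * (bt1 u + kt u * U1 u) + (bt2 u + kt u * U2 u) * (bt2 u + kt u * U2 u))
 with ((bt1 u * bt1 u + bt2 u * bt2 u) + 2 * kt u * (bt1 u * U1 u + bt2 u * U2 u) + kt u * kt u * (U1 u * U1 u + U2 u * U2 u)) by ring.
rewrite O, E, K. ring.
Qed.

Lemma Bs_unit u : good u -> Bs1 u * Bs1 u + Bs2 u * Bs2 u = 1.
Proof.
intro G. generalize (U_unit u G) (bt_orth u G) (kt_sq u G); intros E O K.
unfold Bs1, Bs2.
replace ((- bt1 u + kt u * U1 u) * (- bt1 u + kt u * U1 u) + (- bt2 u + kt u * U2 u) * (- bt2 u + kt u * U2 u))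
 with ((bt1 u * bt1 u + bt2 u * bt2 u) - 2 * kt u * (bt1 u * U1 u + bt2 u * U2 u) + kt u * kt u * (U1 u * U1 u + U2 u * U2 u)) by ring.
rewrite O, E, K. ring.
Qed.

Lemma Cinf_al1 : Cinf (fun r => fst (al r)).
Proof. apply smooth_Cinf. apply Hal. Qed.
Lemma Cinf_al2 : Cinf (fun r => snd (al r)).
Proof. apply smooth_Cinf. apply Hal. Qed.
Lemma Cinf_be1 : Cinf (fun r => fst (be r)).
Proof. apply smooth_Cinf. apply Hbe. Qed.
Lemma Cinf_be2 : Cinf (fun r => snd (be r)).
Proof. apply smooth_Cinf. apply Hbe. Qed.
Lemma Cinf_da1 : Cinf da1.
Proof. apply Cinf_der, Cinf_al1. Qed.
Lemma Cinf_da2 : Cinf da2.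
Proof. apply Cinf_der, Cinf_al2. Qed.

Section Comp.
Variable C : R -> R.
Hypothesis (HC : Cinf C) (HG : forall y, good (C y)).

Lemma CC_be1 : Cinf (fun y => fst (be (C y))).
Proof. intro n; apply (Ck_comp n (fun r => fst (be r))); [apply Cinf_be1|apply HC]. Qed.
Lemma CC_be2 : Cinf (fun y => snd (be (C y))).
Proof. intro n; apply (Ck_comp n (fun r => snd (be r))); [apply Cinf_be2|apply HC]. Qed.
Lemma CC_da1 : Cinf (fun y => da1 (C y)).
Proof. intro n; apply (Ck_comp n da1); [apply Cinf_da1|apply HC]. Qed.
Lemma CC_da2 : Cinf (fun y => da2 (C y)).
Proof. intro n; apply (Ck_comp n da2); [apply Cinf_da2|apply HC]. Qed.
Lemma CC_N0 : Cinf (fun y => N0 (C y)).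
Proof.
intro n. apply Ck_ext with (fun y => sqrt (da1 (C y) * da1 (C y) + da2 (C y) * da2 (C y))).
intro; reflexivity.
apply Ck_sqrt. intro y; apply good_N0sq; auto.
apply Ck_plus; apply Ck_mult; try apply CC_da1; apply CC_da2.
Qed.
Lemma CC_U1 : Cinf (fun y => U1 (C y)).
Proof. intro n. unfold U1. apply Ck_div. intro y; destruct (HG y); lra. apply CC_da1. apply CC_N0. Qed.
Lemma CC_U2 : Cinf (fun y => U2 (C y)).
Proof. intro n. unfold U2. apply Ck_div. intro y; destruct (HG y); lra. apply CC_da2. apply CC_N0. Qed.
Lemma CC_bU : Cinf (fun y => bU (C y)).
Proof. intro n. unfold bU. apply Ck_plus; apply Ck_mult; try apply CC_be1; try apply CC_be2; try apply CC_U1; apply CC_U2. Qed.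
Lemma CC_bt1 : Cinf (fun y => bt1 (C y)).
Proof. intro n. unfold bt1. apply Ck_minus. apply CC_be1. apply Ck_mult. apply CC_bU. apply CC_U1. Qed.
Lemma CC_bt2 : Cinf (fun y => bt2 (C y)).
Proof. intro n. unfold bt2. apply Ck_minus. apply CC_be2. apply Ck_mult. apply CC_bU. apply CC_U2. Qed.
Lemma CC_kt : Cinf (fun y => kt (C y)).
Proof.
intro n. unfold kt. apply Ck_sqrt. intro y; generalize (bt_small _ (HG y)); lra.
apply Ck_minus. apply Ck_const. apply Ck_plus; apply Ck_mult; try apply CC_bt1; apply CC_bt2.
Qed.
Lemma CC_As1 : Cinf (fun y => As1 (C y)).
Proof. intro n. unfold As1. apply Ck_plus. apply CC_bt1. apply Ck_mult. apply CC_kt. apply CC_U1. Qed.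
Lemma CC_As2 : Cinf (fun y => As2 (C y)).
Proof. intro n. unfold As2. apply Ck_plus. apply CC_bt2. apply Ck_mult. apply CC_kt. apply CC_U2. Qed.
Lemma CC_Bs1 : Cinf (fun y => Bs1 (C y)).
Proof. intro n. unfold Bs1. apply Ck_plus. apply Ck_opp. apply CC_bt1. apply Ck_mult. apply CC_kt. apply CC_U1. Qed.
Lemma CC_Bs2 : Cinf (fun y => Bs2 (C y)).
Proof. intro n. unfold Bs2. apply Ck_plus. apply Ck_opp. apply CC_bt2. apply Ck_mult. apply CC_kt. apply CC_U2. Qed.
Lemma CC_Fs : Cinf (fun y => Fs (C y)).
Proof. intro n. unfold Fs. apply Ck_div. intro y; generalize (kt_pos _ (HG y)); lra. apply CC_N0.
apply Ck_scal. apply CC_kt. Qed.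
End Comp.
End Data.

Definition G3 (k1 k2 : R) (f1 f2 : R -> R) (a1 b1 c1 a2 b2 c2 k0 : R) :=
  fun t x => k1 * f1 (a1 * t + b1 * x + c1) + k2 * f2 (a2 * t + b2 * x + c2) + k0.

Lemma G2_G3 f1 f2 a1 b1 c1 a2 b2 c2 k0 : G2 f1 f2 a1 b1 c1 a2 b2 c2 k0 = G3 1 1 f1 f2 a1 b1 c1 a2 b2 c2 k0.
Proof. unfold G2, G3. apply functional_extensionality; intro t; apply functional_extensionality; intro x. ring. Qed.

Section G3d.
Variables (f1 f2 : R -> R) (k1 k2 a1 b1 c1 a2 b2 c2 k0 : R).
Hypothesis (H1 : Cinf f1) (H2 : Cinf f2).

Lemma dT_G3 : dT (G3 k1 k2 f1 f2 a1 b1 c1 a2 b2 c2 k0) = G3 (k1 * a1) (k2 * a2) (Derive f1) (Derive f2) a1 b1 c1 a2 b2 c2 0.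
Proof.
apply functional_extensionality; intro t; apply functional_extensionality; intro x.
unfold dT, G3. apply is_derive_unique.
assert (D1 := isd_comp f1 (fun s => a1 * s + b1 * x + c1) t _ a1 (Cinf_isder f1 H1 _) (isd_lin_t a1 b1 c1 x t)).
assert (D2 := isd_comp f2 (fun s => a2 * s + b2 * x + c2) t _ a2 (Cinf_isder f2 H2 _) (isd_lin_t a2 b2 c2 x t)).
assert (D := isd_plus _ _ _ _ _ (isd_plus _ _ _ _ _ (isd_mult _ _ _ _ _ (isd_const k1 t) D1) (isd_mult _ _ _ _ _ (isd_const k2 t) D2)) (isd_const k0 t)).
apply (is_derive_eq _ _ _ _ D). ring.
Qed.

Lemma dX_G3 : dX (G3 k1 k2 f1 f2 a1 b1 c1 a2 b2 c2 k0) = G3 (k1 * b1) (k2 * b2) (Derive f1) (Derive f2) a1 b1 c1 a2 b2 c2 0.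
Proof.
apply functional_extensionality; intro t; apply functional_extensionality; intro x.
unfold dX, G3. apply is_derive_unique.
assert (D1 := isd_comp f1 (fun s => a1 * t + b1 * s + c1) x _ b1 (Cinf_isder f1 H1 _) (isd_lin_x a1 b1 c1 t x)).
assert (D2 := isd_comp f2 (fun s => a2 * t + b2 * s + c2) x _ b2 (Cinf_isder f2 H2 _) (isd_lin_x a2 b2 c2 t x)).
assert (D := isd_plus _ _ _ _ _ (isd_plus _ _ _ _ _ (isd_mult _ _ _ _ _ (isd_const k1 x) D1) (isd_mult _ _ _ _ _ (isd_const k2 x) D2)) (isd_const k0 x)).
apply (is_derive_eq _ _ _ _ D). ring.
Qed.
End G3d.

Lemma exR_cinf f a b : Cinf f -> ex_RInt f a b.
Proof. intro H. apply (ex_RInt_continuous (V:=R_CompleteNormedModule)). intros; apply Cinf_cont; auto. Qed.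

Lemma RInt_chasles_R f a b c : Cinf f -> RInt f a b + RInt f b c = RInt f a c.
Proof. intro H. apply (RInt_Chasles (V:=R_CompleteNormedModule)); apply exR_cinf; auto. Qed.

Section Surf.
Variables (p q : R) (al be : R -> vec2) (a1f a2f b1f b2f Ff : R -> R) (T : R).
Hypotheses (Hpq : p < q) (Hal : smooth_curve al)
  (Ha1 : Cinf a1f) (Ha2 : Cinf a2f) (Hb1 : Cinf b1f) (Hb2 : Cinf b2f) (HF : Cinf Ff)
  (Hua : forall y, a1f y * a1f y + a2f y * a2f y = 1)
  (Hub : forall y, b1f y * b1f y + b2f y * b2f y = 1)
  (Hpos : forall y1 y2, 0 < (a1f y1 + b1f y2) * (a1f y1 + b1f y2) + (a2f y1 + b2f y2) * (a2f y1 + b2f y2))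
  (HFp : forall y, 0 < Ff y)
  (HFt : exists lo hi, lo < hi /\ (forall y, hi <= y -> 1 <= Ff y) /\ (forall y, y <= lo -> 1 <= Ff y))
  (Hd1 : forall s, p <= s <= q -> (a1f s + b1f s) * Ff s = Derive (fun r => fst (al r)) s)
  (Hd2 : forall s, p <= s <= q -> (a2f s + b2f s) * Ff s = Derive (fun r => snd (al r)) s)
  (Hdb1 : forall s, p <= s <= q -> a1f s - b1f s = 2 * fst (be s))
  (Hdb2 : forall s, p <= s <= q -> a2f s - b2f s = 2 * snd (be s))
  (HT : T = 2 * RInt Ff p q).

Definition sig := fun y => RInt Ff 0 y.
Lemma sig_Cinf : Cinf sig.
Proof. apply prim_Cinf; auto. Qed.
Lemma sig_der y : Derive sig y = Ff y.
Proof. apply is_derive_unique. apply prim_der; auto. Qed.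
Lemma sig_der_pos y : 0 < Derive sig y.
Proof. rewrite sig_der; auto. Qed.
Lemma sig_incr x y : x < y -> sig x < sig y.
Proof. apply strict_incr. apply sig_Cinf. apply sig_der_pos. Qed.

Lemma sig_isder y : is_derive sig y (Ff y).
Proof. apply prim_der; auto. Qed.

Lemma sig_cont : continuity sig.
Proof. intro x. apply continuity_pt_filterlim. apply Cinf_cont. apply sig_Cinf. Qed.

Lemma sig_surj y : exists x, sig x = y.
Proof.
destruct HFt as [lo [hi [Hlh [Hhi Hlo]]]].
assert (Up : forall x, hi <= x -> sig hi + (x - hi) <= sig x).
{ intros x Hx. destruct (mvt_der sig Ff sig_isder hi x Hx) as [xi [Hxi E]].
  generalize (Hhi xi ltac:(lra)); intro. nra. }
assert (Dn : forall x, x <= lo -> sig x <= sig lo - (lo - x)).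
{ intros x Hx. destruct (mvt_der sig Ff sig_isder x lo Hx) as [xi [Hxi E]].
  generalize (Hlo xi ltac:(lra)); intro. nra. }
set (a := lo - Rabs (y - sig lo) - 1).
set (b := hi + Rabs (y - sig hi) + 1).
assert (Ha : sig a < y).
{ generalize (Dn a ltac:(unfold a; generalize (Rabs_pos (y - sig lo)); lra)). unfold a.
  generalize (Rle_abs (- (y - sig lo))). rewrite Rabs_Ropp. lra. }
assert (Hb : y < sig b).
{ generalize (Up b ltac:(unfold b; generalize (Rabs_pos (y - sig hi)); lra)). unfold b.
  generalize (Rle_abs (y - sig hi)). lra. }
destruct (IVT_gen sig a b y sig_cont) as [x [_ Hx]].
- rewrite Rmin_left, Rmax_right; lra.
- exists x; auto.
Qed.

Definition gg := proj1_sig (inverse_Cinf sig sig_Cinf sig_der_pos sig_surj).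
Lemma gg_spec : (forall y, sig (gg y) = y) /\ (forall x, gg (sig x) = x) /\ Cinf gg /\
      forall y, is_derive gg y (/ Derive sig (gg y)).
Proof. unfold gg. destruct (inverse_Cinf sig sig_Cinf sig_der_pos sig_surj) as [g Hg]. simpl. auto. Qed.
Lemma gg_sig x : gg (sig x) = x.
Proof. apply gg_spec. Qed.
Lemma sig_gg y : sig (gg y) = y.
Proof. apply gg_spec. Qed.
Lemma gg_Cinf : Cinf gg.
Proof. apply gg_spec. Qed.
Lemma gg_der y : is_derive gg y (/ Ff (gg y)).
Proof. rewrite <- sig_der. apply gg_spec. Qed.

Definition Ap1 := fun z => a1f (gg z).
Definition Ap2 := fun z => a2f (gg z).
Definition Bp1 := fun z => b1f (gg z).
Definition Bp2 := fun z => b2f (gg z).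
Lemma Ap1_C : Cinf Ap1. Proof. intro n; unfold Ap1, Ap2, Bp1, Bp2; apply Ck_comp; [apply Ha1|apply (gg_Cinf n)]. Qed.
Lemma Ap2_C : Cinf Ap2. Proof. intro n; unfold Ap1, Ap2, Bp1, Bp2; apply Ck_comp; [apply Ha2|apply (gg_Cinf n)]. Qed.
Lemma Bp1_C : Cinf Bp1. Proof. intro n; unfold Ap1, Ap2, Bp1, Bp2; apply Ck_comp; [apply Hb1|apply (gg_Cinf n)]. Qed.
Lemma Bp2_C : Cinf Bp2. Proof. intro n; unfold Ap1, Ap2, Bp1, Bp2; apply Ck_comp; [apply Hb2|apply (gg_Cinf n)]. Qed.

Definition A1 := fun v => RInt Ap1 (sig p) v.
Definition A2 := fun v => RInt Ap2 (sig p) v.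
Definition B1 := fun v => fst (al p) + RInt Bp1 (sig p) v.
Definition B2 := fun v => snd (al p) + RInt Bp2 (sig p) v.

Lemma A1_C : Cinf A1. Proof. apply prim_Cinf, Ap1_C. Qed.
Lemma A2_C : Cinf A2. Proof. apply prim_Cinf, Ap2_C. Qed.
Lemma B1_C : Cinf B1. Proof. intro n. apply Ck_plus. apply Ck_const. apply prim_Cinf, Bp1_C. Qed.
Lemma B2_C : Cinf B2. Proof. intro n. apply Ck_plus. apply Ck_const. apply prim_Cinf, Bp2_C. Qed.

Lemma A1_der v : is_derive A1 v (Ap1 v). Proof. apply prim_der, Ap1_C. Qed.
Lemma A2_der v : is_derive A2 v (Ap2 v). Proof. apply prim_der, Ap2_C. Qed.
Lemma B1_der v : is_derive B1 v (Bp1 v).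
Proof. apply (is_derive_eq _ _ _ _ (isd_plus _ _ _ _ _ (isd_const _ v) (prim_der _ _ Bp1_C v))). ring. Qed.
Lemma B2_der v : is_derive B2 v (Bp2 v).
Proof. apply (is_derive_eq _ _ _ _ (isd_plus _ _ _ _ _ (isd_const _ v) (prim_der _ _ Bp2_C v))). ring. Qed.

Lemma DA1 : Derive A1 = Ap1. Proof. apply functional_extensionality; intro; apply is_derive_unique, A1_der. Qed.
Lemma DA2 : Derive A2 = Ap2. Proof. apply functional_extensionality; intro; apply is_derive_unique, A2_der. Qed.
Lemma DB1 : Derive B1 = Bp1. Proof. apply functional_extensionality; intro; apply is_derive_unique, B1_der. Qed.
Lemma DB2 : Derive B2 = Bp2. Proof. apply functional_extensionality; intro; apply is_derive_unique, B2_der. Qed.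

Lemma sig_pq : sig q - sig p = T / 2.
Proof.
rewrite HT. unfold sig. rewrite <- (RInt_chasles_R Ff 0 p q HF). field.
Qed.

Lemma T_pos : 0 < T.
Proof. generalize sig_pq (sig_incr p q Hpq); lra. Qed.

Lemma gg_range v : sig p <= v <= sig q -> p <= gg v <= q.
Proof.
intros [H1 H2]. split.
- destruct (Rle_dec p (gg v)); auto. assert (gg v < p) by lra. generalize (sig_incr _ _ H). rewrite sig_gg. lra.
- destruct (Rle_dec (gg v) q); auto. assert (q < gg v) by lra. generalize (sig_incr _ _ H). rewrite sig_gg. lra.
Qed.

Lemma AB_al1 v : sig p <= v <= sig q -> A1 v + B1 v = fst (al (gg v)).
Proof.
intro Hv.
set (Phi := fun v => A1 v + B1 v - fst (al (gg v))).
assert (DPhi : forall v, is_derive Phi v (Ap1 v + Bp1 v - Derive (fun r => fst (al r)) (gg v) * / Ff (gg v))).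
{ intro u. unfold Phi.
  assert (Dal := isd_comp (fun r => fst (al r)) gg u _ _ (Cinf_isder _ (smooth_Cinf _ (proj1 Hal)) (gg u)) (gg_der u)).
  apply (is_derive_eq _ _ _ _ (isd_plus _ _ _ _ _ (isd_plus _ _ _ _ _ (A1_der u) (B1_der u)) (isd_opp _ _ _ Dal))).
  ring. }
assert (Z : forall u, sig p <= u <= sig q -> Ap1 u + Bp1 u - Derive (fun r => fst (al r)) (gg u) * / Ff (gg u) = 0).
{ intros u Hu. unfold Ap1, Bp1. rewrite <- Hd1 by (apply gg_range; auto). field. generalize (HFp (gg u)); lra. }
destruct (mvt_der Phi _ DPhi (sig p) v (proj1 Hv)) as [xi [Hxi E]].
rewrite Z in E by lra.
assert (P0 : Phi (sig p) = 0).
{ unfold Phi, A1, B1. rewrite !RInt_point. rewrite gg_sig. unfold zero; simpl. ring. }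
unfold Phi in E, P0. lra.
Qed.

Lemma AB_al2 v : sig p <= v <= sig q -> A2 v + B2 v = snd (al (gg v)).
Proof.
intro Hv.
set (Phi := fun v => A2 v + B2 v - snd (al (gg v))).
assert (DPhi : forall v, is_derive Phi v (Ap2 v + Bp2 v - Derive (fun r => snd (al r)) (gg v) * / Ff (gg v))).
{ intro u. unfold Phi.
  assert (Dal := isd_comp (fun r => snd (al r)) gg u _ _ (Cinf_isder _ (smooth_Cinf _ (proj2 Hal)) (gg u)) (gg_der u)).
  apply (is_derive_eq _ _ _ _ (isd_plus _ _ _ _ _ (isd_plus _ _ _ _ _ (A2_der u) (B2_der u)) (isd_opp _ _ _ Dal))).
  ring. }
assert (Z : forall u, sig p <= u <= sig q -> Ap2 u + Bp2 u - Derive (fun r => snd (al r)) (gg u) * / Ff (gg u) = 0).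
{ intros u Hu. unfold Ap2, Bp2. rewrite <- Hd2 by (apply gg_range; auto). field. generalize (HFp (gg u)); lra. }
destruct (mvt_der Phi _ DPhi (sig p) v (proj1 Hv)) as [xi [Hxi E]].
rewrite Z in E by lra.
assert (P0 : Phi (sig p) = 0).
{ unfold Phi, A2, B2. rewrite !RInt_point. rewrite gg_sig. unfold zero; simpl. ring. }
unfold Phi in E, P0. lra.
Qed.

Definition lam := T / (q - p).
Definition nu0 := sig p - T / 4.
Definition cc := nu0 - lam * p.
Definition ga := fun t x => (G2 A1 B1 1 lam cc 0 lam cc 0 t x, G2 A2 B2 1 lam cc 0 lam cc 0 t x).
Definition PP := fun _ : R => p.
Definition QQ := fun t => q - t / lam.

Lemma lam_pos : 0 < lam.
Proof. unfold lam. apply Rmult_lt_0_compat. apply T_pos. apply Rinv_0_lt_compat; lra. Qed.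

Lemma g1_eq : g1 ga = G3 1 1 A1 B1 1 lam cc 0 lam cc 0.
Proof. rewrite <- G2_G3. reflexivity. Qed.
Lemma g2_eq : g2 ga = G3 1 1 A2 B2 1 lam cc 0 lam cc 0.
Proof. rewrite <- G2_G3. reflexivity. Qed.

Definition mu t x := 1 * t + lam * x + cc.
Definition nu t x := 0 * t + lam * x + cc.

Ltac g3d := unfold G3; try (apply functional_extensionality; intro; apply functional_extensionality; intro; ring).

Lemma frame t x :
  Xt ga t x = mkV3 1 (Ap1 (mu t x)) (Ap2 (mu t x)) /\
  Xx ga t x = mkV3 0 (lam * (Ap1 (mu t x) + Bp1 (nu t x))) (lam * (Ap2 (mu t x) + Bp2 (nu t x))) /\
  Xtt ga t x = mkV3 0 (Derive Ap1 (mu t x)) (Derive Ap2 (mu t x)) /\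
  Xtx ga t x = mkV3 0 (lam * Derive Ap1 (mu t x)) (lam * Derive Ap2 (mu t x)) /\
  Xxx ga t x = mkV3 0 (lam * lam * (Derive Ap1 (mu t x) + Derive Bp1 (nu t x)))
                      (lam * lam * (Derive Ap2 (mu t x) + Derive Bp2 (nu t x))).
Proof.
unfold Xt, Xx, Xtt, Xtx, Xxx, mu, nu. rewrite g1_eq, g2_eq.
rewrite !dT_G3 by (apply A1_C || apply B1_C || apply A2_C || apply B2_C).
rewrite !dX_G3 by (apply A1_C || apply B1_C || apply A2_C || apply B2_C).
rewrite DA1, DA2, DB1, DB2.
rewrite !dT_G3 by (apply Ap1_C || apply Bp1_C || apply Ap2_C || apply Bp2_C).
rewrite !dX_G3 by (apply Ap1_C || apply Bp1_C || apply Ap2_C || apply Bp2_C).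
unfold G3. repeat split; f_equal; ring.
Qed.

Lemma unitA t x : Ap1 (mu t x) * Ap1 (mu t x) + Ap2 (mu t x) * Ap2 (mu t x) = 1.
Proof. apply Hua. Qed.
Lemma unitB t x : Bp1 (nu t x) * Bp1 (nu t x) + Bp2 (nu t x) * Bp2 (nu t x) = 1.
Proof. apply Hub. Qed.
Lemma posAB t x : 0 < (Ap1 (mu t x) + Bp1 (nu t x)) * (Ap1 (mu t x) + Bp1 (nu t x)) + (Ap2 (mu t x) + Bp2 (nu t x)) * (Ap2 (mu t x) + Bp2 (nu t x)).
Proof. apply Hpos. Qed.

Lemma gtt0 t x : gtt ga t x = 0.
Proof.
unfold gtt. destruct (frame t x) as [E _]. rewrite E. unfold mink; simpl.
generalize (unitA t x); intro U. lra.
Qed.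

Definition cv t x := 1 + Ap1 (mu t x) * Bp1 (nu t x) + Ap2 (mu t x) * Bp2 (nu t x).

Lemma cv_pos t x : 0 < cv t x.
Proof.
generalize (unitA t x) (unitB t x) (posAB t x); intros U V P. unfold cv. nra.
Qed.

Lemma gtx_eq t x : gtx ga t x = lam * cv t x.
Proof.
unfold gtx. destruct (frame t x) as [E1 [E2 _]]. rewrite E1, E2. unfold mink; simpl.
generalize (unitA t x); intro U. unfold cv. 
transitivity (lam * ((Ap1 (mu t x) * Ap1 (mu t x) + Ap2 (mu t x) * Ap2 (mu t x)) + Ap1 (mu t x) * Bp1 (nu t x) + Ap2 (mu t x) * Bp2 (nu t x))); [ring|].
rewrite U. ring.
Qed.

Lemma gxx_eq t x : gxx ga t x = 2 * lam * gtx ga t x.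
Proof.
rewrite gtx_eq. unfold gxx. destruct (frame t x) as [_ [E2 _]]. rewrite E2. unfold mink; simpl.
generalize (unitA t x) (unitB t x); intros U V. unfold cv.
transitivity (lam * lam * ((Ap1 (mu t x) * Ap1 (mu t x) + Ap2 (mu t x) * Ap2 (mu t x)) + (Bp1 (nu t x) * Bp1 (nu t x) + Bp2 (nu t x) * Bp2 (nu t x)) + 2 * (Ap1 (mu t x) * Bp1 (nu t x) + Ap2 (mu t x) * Bp2 (nu t x)))); [ring|].
rewrite U, V. ring.
Qed.

Lemma timelike_ga t x : timelike_at ga t x.
Proof.
unfold timelike_at, gdet. rewrite gtt0, gtx_eq.
generalize (cv_pos t x) lam_pos; intros. assert (0 < lam * cv t x) by (apply Rmult_lt_0_compat; auto).
nra.
Qed.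

Lemma maximal_ga t x : maximal_at ga t x.
Proof.
unfold maximal_at, meanCurv.
assert (Z : v3add (v3scal (itt ga t x) (Xtt ga t x))
      (v3add (v3scal (2 * itx ga t x) (Xtx ga t x)) (v3scal (ixx ga t x) (Xxx ga t x))) = v3zero).
{ destruct (frame t x) as [_ [_ [E3 [E4 E5]]]]. rewrite E3, E4, E5.
  unfold itt, itx, ixx. rewrite gxx_eq, gtt0. unfold v3add, v3scal, v3zero; simpl. unfold Rdiv. f_equal; ring. }
rewrite Z. unfold nproj, mink, v3add, v3scal, v3zero; simpl. f_equal; ring.
Qed.

Lemma regular_ga t x : regular_at ga t x.
Proof.
unfold regular_at. intros c1 c2 E. destruct (frame t x) as [E1 [E2 _]]. rewrite E1, E2 in E.
unfold v3add, v3scal, v3zero in E. injection E. intros H3 H2 H1.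
assert (c1 = 0) by lra. subst c1.
generalize (posAB t x) lam_pos; intros P L.
set (u := Ap1 (mu t x) + Bp1 (nu t x)) in *. set (v := Ap2 (mu t x) + Bp2 (nu t x)) in *.
assert (Hu : c2 * (lam * u) = 0) by lra. assert (Hv : c2 * (lam * v) = 0) by lra.
assert (c2 * lam * (u * u + v * v) = 0) by (transitivity ((c2 * (lam * u)) * u + (c2 * (lam * v)) * v); [ring|rewrite Hu, Hv; ring]).
split; auto. apply Rmult_integral in H. destruct H as [H|H]; [|lra].
apply Rmult_integral in H. destruct H; lra.
Qed.

Lemma nullP : null_boundary ga PP T.
Proof.
unfold null_boundary. intros t _ . simpl.
change (mink (Xt ga t p) (Xt ga t p) = 0). apply gtt0.
Qed.

Lemma nullQ : null_boundary ga QQ T.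
Proof.
unfold null_boundary. intros t _. simpl.
generalize lam_pos; intro L.
assert (E1 : forall s, g1 ga s (QQ s) = A1 (lam * q + cc) + B1 (lam * q + cc - s)).
{ intro s. rewrite g1_eq. unfold G3, QQ.
  replace (1 * s + lam * (q - s / lam) + cc) with (lam * q + cc) by (field; lra).
  replace (0 * s + lam * (q - s / lam) + cc) with (lam * q + cc - s) by (field; lra). ring. }
assert (E2 : forall s, g2 ga s (QQ s) = A2 (lam * q + cc) + B2 (lam * q + cc - s)).
{ intro s. rewrite g2_eq. unfold G3, QQ.
  replace (1 * s + lam * (q - s / lam) + cc) with (lam * q + cc) by (field; lra).
  replace (0 * s + lam * (q - s / lam) + cc) with (lam * q + cc - s) by (field; lra). ring. }
rewrite (Derive_ext _ _ t E1), (Derive_ext _ _ t E2).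
assert (D : forall (F : R -> R) c d, (forall v, is_derive F v (d v)) -> Derive (fun s => c + F (lam * q + cc - s)) t = - d (lam * q + cc - t)).
{ intros F c d HD. apply is_derive_unique.
  assert (Dl : is_derive (fun s => lam * q + cc - s) t (-1)).
  { apply (is_derive_eq _ _ _ _ (isd_plus _ _ _ _ _ (isd_const (lam*q+cc) t) (isd_opp _ _ _ (isd_id t)))). ring. }
  apply (is_derive_eq _ _ _ _ (isd_plus _ _ _ _ _ (isd_const c t) (isd_comp F _ t _ _ (HD _) Dl))). ring. }
rewrite (D B1 _ Bp1 B1_der), (D B2 _ Bp2 B2_der).
unfold mink; simpl. generalize (Hub (gg (lam * q + cc - t))). unfold Bp1, Bp2. intro. lra.
Qed.

Lemma sig_le x y : x <= y -> sig x <= sig y.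
Proof. intro H. destruct H. left; apply sig_incr; auto. subst; lra. Qed.

Lemma contain s : p <= s <= q ->
  exists x, Omega PP QQ T 0 x /\ ga 0 x = al s /\
    exists c1 c2 : R, mkV3 1 (fst (be s)) (snd (be s)) = v3add (v3scal c1 (Xt ga 0 x)) (v3scal c2 (Xx ga 0 x)).
Proof.
intro Hs. generalize lam_pos T_pos sig_pq; intros L TP SP.
assert (Ss : sig p <= sig s <= sig q) by (split; apply sig_le; lra).
exists (p + (sig s - nu0) / lam).
assert (Emu : mu 0 (p + (sig s - nu0) / lam) = sig s) by (unfold mu, cc; field; lra).
assert (Enu : nu 0 (p + (sig s - nu0) / lam) = sig s) by (unfold nu, cc; field; lra).
split; [|split].
- unfold Omega, PP, QQ. split. lra. split.
  + assert (0 <= (sig s - nu0) / lam) by (apply Rmult_le_pos; [unfold nu0; lra|left; apply Rinv_0_lt_compat; auto]). lra.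
  + assert ((sig s - nu0) / lam <= q - p).
    { apply Rmult_le_reg_r with lam; auto. unfold Rdiv. rewrite Rmult_assoc, Rinv_l, Rmult_1_r by lra.
      unfold lam, nu0. unfold Rdiv. rewrite <- Rmult_assoc. rewrite (Rmult_comm (q - p) T), Rmult_assoc, Rinv_r, Rmult_1_r by lra. lra. }
    unfold Rdiv at 2. rewrite Rmult_0_l. lra.
- unfold ga. rewrite (surjective_pairing (al s)). f_equal.
  + unfold G2. fold (mu 0 (p + (sig s - nu0) / lam)) (nu 0 (p + (sig s - nu0) / lam)).
    rewrite Emu, Enu. rewrite AB_al1 by auto. rewrite gg_sig. ring.
  + unfold G2. fold (mu 0 (p + (sig s - nu0) / lam)) (nu 0 (p + (sig s - nu0) / lam)).
    rewrite Emu, Enu. rewrite AB_al2 by auto. rewrite gg_sig. ring.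
- exists 1, (- / (2 * lam)). destruct (frame 0 (p + (sig s - nu0) / lam)) as [E1 [E2 _]].
  rewrite E1, E2, Emu, Enu. unfold Ap1, Ap2, Bp1, Bp2. rewrite gg_sig.
  unfold v3add, v3scal; simpl.
  generalize (Hdb1 s Hs) (Hdb2 s Hs); intros D1 D2.
  f_equal; [ring| |].
  + replace (fst (be s)) with ((a1f s - b1f s) / 2) by lra. field; lra.
  + replace (snd (be s)) with ((a2f s - b2f s) / 2) by lra. field; lra.
Qed.

Theorem surface_main :
  exists (P0 Q0 : R -> R) (ga0 : R -> R -> vec2),
    smooth1 P0 /\ smooth1 Q0 /\ smooth_map2 ga0 /\
    P0 0 = p /\ Q0 0 = q /\ P0 T = Q0 T /\
    (forall t, 0 <= t <= T -> P0 t <= Q0 t) /\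
    (forall t x, Omega P0 Q0 T t x ->
       regular_at ga0 t x /\ timelike_at ga0 t x /\ maximal_at ga0 t x) /\
    (forall s, p <= s <= q ->
       exists x, Omega P0 Q0 T 0 x /\ ga0 0 x = al s /\
         exists c1 c2 : R,
           mkV3 1 (fst (be s)) (snd (be s)) =
           v3add (v3scal c1 (Xt ga0 0 x)) (v3scal c2 (Xx ga0 0 x))) /\
    null_boundary ga0 P0 T /\ null_boundary ga0 Q0 T.
Proof.
generalize lam_pos T_pos; intros L TP.
exists PP, QQ, ga. split; [|split; [|split; [|split; [|split; [|split; [|split; [|split; [|split]]]]]]]].
- unfold smooth1. apply Cinf_smooth. intro n; unfold PP; apply Ck_const.
- unfold smooth1. apply Cinf_smooth. intro n. unfold QQ. apply Ck_minus. apply Ck_const. apply Ck_div. intro; lra. apply Ck_id. apply Ck_const.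
- split.
  + change (smooth2 (G2 A1 B1 1 lam cc 0 lam cc 0)). apply G2_smooth; [apply A1_C|apply B1_C].
  + change (smooth2 (G2 A2 B2 1 lam cc 0 lam cc 0)). apply G2_smooth; [apply A2_C|apply B2_C].
- reflexivity.
- unfold QQ. unfold Rdiv; ring.
- unfold PP, QQ, lam. field. lra.
- intros t Ht. unfold PP, QQ.
  assert (t / lam <= q - p).
  { apply Rmult_le_reg_r with lam; auto. unfold Rdiv. rewrite Rmult_assoc, Rinv_l, Rmult_1_r by lra.
    unfold lam. unfold Rdiv. rewrite <- Rmult_assoc. rewrite (Rmult_comm (q - p) T), Rmult_assoc, Rinv_r, Rmult_1_r by lra. lra. }
  lra.
- intros t x _. split; [apply regular_ga|split; [apply timelike_ga|apply maximal_ga]].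
- apply contain.
- split; [apply nullP|apply nullQ].
Qed.

End Surf.

Lemma ball_R (x e y : R) : ball x e y <-> Rabs (y - x) < e.
Proof. unfold ball; simpl. unfold AbsRing_ball, abs, minus, plus, opp; simpl. tauto. Qed.

Lemma cont_delta f x eps : Cinf f -> 0 < eps ->
  exists d, 0 < d /\ forall u, Rabs (u - x) < d -> Rabs (f u - f x) < eps.
Proof.
intros Hf He.
assert (C := Cinf_cont f Hf x).
assert (L := C _ (locally_ball (f x) (mkposreal _ He))).
destruct L as [d Hd]. exists d. split. apply cond_pos.
intros u Hu. apply ball_R in Hu. specialize (Hd u Hu). apply ball_R in Hd. auto.
Qed.

Definition vn (x y : R) := sqrt (x * x + y * y).

Lemma vn_norm (x y : R) : vn x y = norm ((x, y) : R * R).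
Proof.
unfold vn. unfold norm; simpl. unfold prod_norm; simpl. unfold norm; simpl. unfold abs; simpl.
f_equal. rewrite !Rmult_1_r, <- !Rabs_mult. rewrite (Rabs_right (x*x)), (Rabs_right (y*y)) by nra. ring.
Qed.

Lemma vn_tri x1 y1 x2 y2 : vn (x1 + x2) (y1 + y2) <= vn x1 y1 + vn x2 y2.
Proof. rewrite !vn_norm. apply (norm_triangle (V:=prod_NormedModule R_AbsRing R_NormedModule R_NormedModule) (x1,y1) (x2,y2)). Qed.

Lemma vn_pos x y : 0 <= vn x y.
Proof. apply sqrt_pos. Qed.

Lemma vn_le_abs x y : vn x y <= Rabs x + Rabs y.
Proof.
unfold vn. rewrite <- (sqrt_Rsqr (Rabs x + Rabs y)) by (generalize (Rabs_pos x) (Rabs_pos y); lra).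
apply sqrt_le_1_alt. unfold Rsqr. generalize (Rabs_pos x) (Rabs_pos y); intros.
assert (E1 : x * x = Rabs x * Rabs x) by (rewrite <- Rabs_mult; rewrite Rabs_right; nra).
assert (E2 : y * y = Rabs y * Rabs y) by (rewrite <- Rabs_mult; rewrite Rabs_right; nra).
rewrite E1, E2. nra.
Qed.

Lemma vn_sq_pos x y : 0 < vn x y -> 0 < x * x + y * y.
Proof. intro H. unfold vn in H. apply sq_pos_of_sqrt; auto. Qed.

Lemma vn_opp x y : vn (- x) (- y) = vn x y.
Proof. unfold vn. f_equal. ring. Qed.

Lemma cont_vn (f g : R -> R) x : continuous f x -> continuous g x -> continuous (fun t => vn (f t) (g t)) x.
Proof.
intros Hf Hg. unfold vn.
apply (continuous_comp (fun t => f t * f t + g t * g t) sqrt).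
- apply cont_plusR; apply cont_multR; auto.
- apply continuity_pt_filterlim. apply continuity_pt_sqrt. nra.
Qed.

Lemma cont_Dvn f1 f2 x : Cinf f1 -> Cinf f2 -> continuous (fun t => vn (Derive f1 t) (Derive f2 t)) x.
Proof. intros H1 H2. apply cont_vn; apply Cinf_cont; apply Cinf_der; auto. Qed.

Lemma exR_cont (f : R -> R) a b : (forall x, continuous f x) -> ex_RInt f a b.
Proof. intro H. apply (ex_RInt_continuous (V:=R_CompleteNormedModule)). intros; auto. Qed.

Lemma variation f1 f2 a b x y : Cinf f1 -> Cinf f2 -> a <= x -> x <= y -> y <= b ->
  vn (f1 y - f1 x) (f2 y - f2 x) <= RInt (fun t => vn (Derive f1 t) (Derive f2 t)) a b.
Proof.
intros H1 H2 Hax Hxy Hyb.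
set (g := fun t => vn (Derive f1 t) (Derive f2 t)).
assert (Cg : forall t, continuous g t) by (intro; apply cont_Dvn; auto).
assert (I1 : is_RInt (fun t => Derive f1 t) x y (f1 y - f1 x)).
{ apply (is_RInt_derive (V:=R_CompleteNormedModule) f1 (Derive f1)).
  intros; apply Cinf_isder; auto. intros; apply Cinf_cont, Cinf_der; auto. }
assert (I2 : is_RInt (fun t => Derive f2 t) x y (f2 y - f2 x)).
{ apply (is_RInt_derive (V:=R_CompleteNormedModule) f2 (Derive f2)).
  intros; apply Cinf_isder; auto. intros; apply Cinf_cont, Cinf_der; auto. }
assert (I12 := is_RInt_fct_extend_pair (fun t => (Derive f1 t, Derive f2 t)) x y _ _ I1 I2).
assert (B : norm ((f1 y - f1 x, f2 y - f2 x) : R * R) <= RInt g x y).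
{ apply (norm_RInt_le (fun t => (Derive f1 t, Derive f2 t)) g x y _ _ Hxy).
  - intros t _. rewrite <- vn_norm. unfold g. lra.
  - exact I12.
  - apply (RInt_correct (V:=R_CompleteNormedModule)). apply exR_cont; auto. }
rewrite <- vn_norm in B.
assert (E1 : RInt g a x + RInt g x y = RInt g a y) by (apply (RInt_Chasles (V:=R_CompleteNormedModule) g a x y); apply exR_cont; auto).
assert (E2 : RInt g a y + RInt g y b = RInt g a b) by (apply (RInt_Chasles (V:=R_CompleteNormedModule) g a y b); apply exR_cont; auto).
assert (0 <= RInt g a x) by (apply RInt_ge_0; auto; [apply exR_cont; auto|intros; apply vn_pos]).
assert (0 <= RInt g y b) by (apply RInt_ge_0; auto; [apply exR_cont; auto|intros; apply vn_pos]).
lra.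
Qed.

Lemma vn_div x y N : 0 < N -> vn (x / N) (y / N) * N = vn x y.
Proof.
intro HN. unfold vn.
replace (x / N * (x / N) + y / N * (y / N)) with ((x * x + y * y) * (/ N * / N)) by (field; lra).
rewrite sqrt_mult_alt by nra. rewrite sqrt_square by (left; apply Rinv_0_lt_compat; auto).
field. lra.
Qed.

Section Build.
Variables (p q : R) (al be : R -> vec2).
Hypotheses (Hpq : p < q) (Hal : smooth_curve al) (Hbe : smooth_curve be)
 (Hreg : forall s, p <= s <= q -> 0 < norm2 (dcurve al s))
 (Horth : forall s, p <= s <= q -> dot2 (be s) (dcurve al s) = 0)
 (Hsm : forall s, p <= s <= q -> norm2 (be s) < 1)
 (Hj : jindex al be p q > 3 / 2 * arcInt al p q
      (fun s => norm2 (nablaU al (avec al be) s) + norm2 (nablaU al (bvec al be) s))).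

Definition phi1 u := da1 al u * da1 al u + da2 al u * da2 al u.
Definition phi2 u := fst (be u) * fst (be u) + snd (be u) * snd (be u).
Lemma phi1_C : Cinf phi1.
Proof. intro n. unfold phi1. apply Ck_plus; apply Ck_mult; try apply (Cinf_da1 al Hal); apply (Cinf_da2 al Hal). Qed.
Lemma phi2_C : Cinf phi2.
Proof. intro n. unfold phi2. apply Ck_plus; apply Ck_mult; try apply (Cinf_be1 be Hbe); apply (Cinf_be2 be Hbe). Qed.

Lemma good_of u : 0 < phi1 u -> phi2 u < 1 -> good al be u.
Proof.
intros H1 H2. split.
- rewrite N0_eq. apply sqrt_lt_R0. apply H1.
- unfold norm2, dot2. rewrite <- sqrt_1. apply sqrt_lt_1_alt. split. unfold phi2 in H2. nra. apply H2.
Qed.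

Lemma phi_data s : p <= s <= q -> 0 < phi1 s /\ phi2 s < 1.
Proof.
intro Hs. split.
- unfold phi1. apply sq_pos_of_sqrt. rewrite <- N0_eq. apply Hreg; auto.
- unfold phi2. rewrite <- nb_sq. generalize (Hsm s Hs) (sqrt_pos (dot2 (be s) (be s))). unfold norm2. intros. nra.
Qed.

Lemma good_data s : p <= s <= q -> good al be s.
Proof. intro Hs. destruct (phi_data s Hs). apply good_of; auto. Qed.

Lemma good_nbhd : exists d0, 0 < d0 /\ forall u, p - d0 <= u <= q + d0 -> good al be u.
Proof.
destruct (phi_data p ltac:(lra)) as [Ap Bp].
destruct (phi_data q ltac:(lra)) as [Aq Bq].
destruct (cont_delta phi1 p (phi1 p / 2) phi1_C ltac:(lra)) as [d1 [D1 H1]].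
destruct (cont_delta phi2 p ((1 - phi2 p) / 2) phi2_C ltac:(lra)) as [d2 [D2 H2]].
destruct (cont_delta phi1 q (phi1 q / 2) phi1_C ltac:(lra)) as [d3 [D3 H3]].
destruct (cont_delta phi2 q ((1 - phi2 q) / 2) phi2_C ltac:(lra)) as [d4 [D4 H4]].
set (d := Rmin (Rmin d1 d2) (Rmin d3 d4)).
assert (Hd : 0 < d) by (unfold d; repeat apply Rmin_glb_lt; auto).
assert (d <= d1 /\ d <= d2 /\ d <= d3 /\ d <= d4).
{ unfold d. repeat split.
  apply Rle_trans with (Rmin d1 d2); [apply Rmin_l|apply Rmin_l].
  apply Rle_trans with (Rmin d1 d2); [apply Rmin_l|apply Rmin_r].
  apply Rle_trans with (Rmin d3 d4); [apply Rmin_r|apply Rmin_l].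
  apply Rle_trans with (Rmin d3 d4); [apply Rmin_r|apply Rmin_r]. }
exists (d / 2). split. lra.
intros u Hu.
destruct (Rlt_dec u p) as [Hup|Hup].
- assert (Rabs (u - p) < d) by (rewrite Rabs_left by lra; lra).
  specialize (H1 u ltac:(lra)). specialize (H2 u ltac:(lra)).
  apply Rabs_lt_between in H1. apply Rabs_lt_between in H2.
  apply good_of; lra.
- destruct (Rlt_dec q u) as [Huq|Huq].
  + assert (Rabs (u - q) < d) by (rewrite Rabs_right by lra; lra).
    specialize (H3 u ltac:(lra)). specialize (H4 u ltac:(lra)).
    apply Rabs_lt_between in H3. apply Rabs_lt_between in H4.
    apply good_of; lra.
  + apply good_data; lra.
Qed.
Section WithC0.
Variables (d0 : R) (c0 : R -> R).
Hypotheses (Hd0 : 0 < d0) (Hgood : forall u, p - d0 <= u <= q + d0 -> good al be u)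
  (Hc0C : Cinf c0) (Hc0r : forall s, p - d0 <= c0 s <= q + d0)
  (Hc0id : forall s, p - d0 / 2 <= s <= q + d0 / 2 -> c0 s = s).

Lemma goodc u : good al be (c0 u).
Proof. apply Hgood, Hc0r. Qed.

Definition Ah1 u := As1 al be (c0 u).
Definition Ah2 u := As2 al be (c0 u).
Definition Bh1 u := Bs1 al be (c0 u).
Definition Bh2 u := Bs2 al be (c0 u).
Definition Nc u := N0 al (c0 u).
Definition Kc u := kt al be (c0 u).

Lemma Ah1_C : Cinf Ah1. Proof. apply (CC_As1 al be Hal Hbe c0 Hc0C goodc). Qed.
Lemma Ah2_C : Cinf Ah2. Proof. apply (CC_As2 al be Hal Hbe c0 Hc0C goodc). Qed.
Lemma Bh1_C : Cinf Bh1. Proof. apply (CC_Bs1 al be Hal Hbe c0 Hc0C goodc). Qed.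
Lemma Bh2_C : Cinf Bh2. Proof. apply (CC_Bs2 al be Hal Hbe c0 Hc0C goodc). Qed.
Lemma Nc_C : Cinf Nc. Proof. apply (CC_N0 al be Hal c0 Hc0C goodc). Qed.
Lemma Kc_C : Cinf Kc. Proof. apply (CC_kt al be Hal Hbe c0 Hc0C goodc). Qed.

Lemma c0_data s : p <= s <= q -> c0 s = s.
Proof. intro; apply Hc0id; lra. Qed.

Lemma bU_data s : p <= s <= q -> bU al be s = 0.
Proof.
intro Hs. generalize (Horth s Hs). unfold bU, U1, U2, dot2, dcurve. simpl. intro E.
unfold da1, da2. unfold Rdiv.
transitivity ((fst (be s) * Derive (fun r => fst (al r)) s + snd (be s) * Derive (fun r => snd (al r)) s) * / N0 al s); [ring|].
rewrite E. ring.
Qed.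

Lemma kt_data s : p <= s <= q -> kt al be s = sqrt (1 - norm2 (be s) ^ 2).
Proof. intro Hs. unfold kt, bt1, bt2. rewrite bU_data, nb_sq by auto. f_equal. ring. Qed.

Lemma Ah1_data s : p <= s <= q -> Ah1 s = fst (avec al be s).
Proof. intro Hs. unfold Ah1. rewrite c0_data by auto. unfold As1. rewrite kt_data by auto. unfold avec. cbn [fst snd].
unfold bt1. rewrite bU_data by auto. unfold U1, unitT. cbn [fst snd]. unfold da1, N0, dcurve. cbn [fst snd]. ring. Qed.
Lemma Ah2_data s : p <= s <= q -> Ah2 s = snd (avec al be s).
Proof. intro Hs. unfold Ah2. rewrite c0_data by auto. unfold As2. rewrite kt_data by auto. unfold avec. cbn [fst snd].
unfold bt2. rewrite bU_data by auto. unfold U2, unitT. cbn [fst snd]. unfold da2, N0, dcurve. cbn [fst snd]. ring. Qed.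
Lemma Bh1_data s : p <= s <= q -> Bh1 s = fst (bvec al be s).
Proof. intro Hs. unfold Bh1. rewrite c0_data by auto. unfold Bs1. rewrite kt_data by auto. unfold bvec. cbn [fst snd].
unfold bt1. rewrite bU_data by auto. unfold U1, unitT. cbn [fst snd]. unfold da1, N0, dcurve. cbn [fst snd]. ring. Qed.
Lemma Bh2_data s : p <= s <= q -> Bh2 s = snd (bvec al be s).
Proof. intro Hs. unfold Bh2. rewrite c0_data by auto. unfold Bs2. rewrite kt_data by auto. unfold bvec. cbn [fst snd].
unfold bt2. rewrite bU_data by auto. unfold U2, unitT. cbn [fst snd]. unfold da2, N0, dcurve. cbn [fst snd]. ring. Qed.

Definition Va := RInt (fun t => vn (Derive Ah1 t) (Derive Ah2 t)) p q.
Definition Vb := RInt (fun t => vn (Derive Bh1 t) (Derive Bh2 t)) p q.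

Lemma loc_in s : p < s < q -> locally s (fun r => p <= r <= q).
Proof. intro H. apply locally_interval with p q; simpl; try lra. intros; lra. Qed.

Lemma hyp_V : arcInt al p q (fun s => norm2 (nablaU al (avec al be) s) + norm2 (nablaU al (bvec al be) s)) = Va + Vb.
Proof.
unfold arcInt, Va, Vb.
rewrite <- (RInt_plus (V:=R_CompleteNormedModule)) by (apply exR_cont; intro; apply cont_Dvn; (apply Ah1_C || apply Ah2_C || apply Bh1_C || apply Bh2_C)).
apply RInt_ext. rewrite Rmin_left, Rmax_right by lra. intros s Hs.
assert (N : 0 < norm2 (dcurve al s)) by (apply Hreg; lra).
assert (EA1 : fst (dcurve (avec al be) s) = Derive Ah1 s).
{ unfold dcurve; cbn [fst snd]. apply Derive_ext_loc. generalize (loc_in s Hs). apply filter_imp. intros r Hr. symmetry; apply Ah1_data; auto. }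
assert (EA2 : snd (dcurve (avec al be) s) = Derive Ah2 s).
{ unfold dcurve; cbn [fst snd]. apply Derive_ext_loc. generalize (loc_in s Hs). apply filter_imp. intros r Hr. symmetry; apply Ah2_data; auto. }
assert (EB1 : fst (dcurve (bvec al be) s) = Derive Bh1 s).
{ unfold dcurve; cbn [fst snd]. apply Derive_ext_loc. generalize (loc_in s Hs). apply filter_imp. intros r Hr. symmetry; apply Bh1_data; auto. }
assert (EB2 : snd (dcurve (bvec al be) s) = Derive Bh2 s).
{ unfold dcurve; cbn [fst snd]. apply Derive_ext_loc. generalize (loc_in s Hs). apply filter_imp. intros r Hr. symmetry; apply Bh2_data; auto. }
unfold nablaU. cbv zeta. rewrite EA1, EA2, EB1, EB2.
rewrite Rmult_plus_distr_r.
change (norm2 (Derive Ah1 s / norm2 (dcurve al s), Derive Ah2 s / norm2 (dcurve al s))) with (vn (Derive Ah1 s / norm2 (dcurve al s)) (Derive Ah2 s / norm2 (dcurve al s))).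
change (norm2 (Derive Bh1 s / norm2 (dcurve al s), Derive Bh2 s / norm2 (dcurve al s))) with (vn (Derive Bh1 s / norm2 (dcurve al s)) (Derive Bh2 s / norm2 (dcurve al s))).
rewrite !vn_div by auto. reflexivity.
Qed.

Definition LL := RInt Nc p q.
Definition II := RInt (fun s => Nc s / Kc s) p q.

Lemma Nc_pos u : 0 < Nc u. Proof. apply goodc. Qed.
Lemma Kc_pos u : 0 < Kc u. Proof. apply (kt_pos al be), goodc. Qed.
Lemma NK_C : Cinf (fun s => Nc s / Kc s).
Proof. intro n. apply Ck_div. intro u; generalize (Kc_pos u); lra. apply Nc_C. apply Kc_C. Qed.

Lemma length_eq : length al p q = LL.
Proof. unfold length, arcInt, LL. apply RInt_ext. rewrite Rmin_left, Rmax_right by lra. intros s Hs.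
unfold Nc. rewrite c0_data by lra. unfold N0. apply Rmult_1_l. Qed.

Lemma I_eq : arcInt al p q (fun s => / sqrt (1 - norm2 (be s) ^ 2)) = II.
Proof. unfold arcInt, II. apply RInt_ext. rewrite Rmin_left, Rmax_right by lra. intros s Hs.
unfold Nc, Kc. rewrite c0_data by lra. rewrite kt_data by lra. unfold N0. unfold Rdiv. apply Rmult_comm. Qed.

Lemma RInt0 a b : RInt (fun _ => 0) a b = 0.
Proof. rewrite (RInt_const (V:=R_CompleteNormedModule)). unfold scal; simpl. unfold mult; simpl. ring. Qed.

Lemma LL_pos : 0 < LL.
Proof.
unfold LL. rewrite <- (RInt0 p q). apply RInt_lt; auto.
intros; apply Cinf_cont, Nc_C. intros; apply continuous_const. intros; apply Nc_pos.
Qed.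

Lemma II_pos : 0 < II.
Proof.
unfold II. rewrite <- (RInt0 p q). apply RInt_lt; auto.
intros; apply Cinf_cont, NK_C. intros; apply continuous_const.
intros; apply Rdiv_lt_0_compat; [apply Nc_pos|apply Kc_pos].
Qed.

Lemma jindex_eq : jindex al be p q = LL / II.
Proof. unfold jindex. rewrite length_eq, I_eq. reflexivity. Qed.

Lemma exists_s1 : exists s1, p <= s1 <= q /\ LL / II <= Kc s1.
Proof.
generalize LL_pos II_pos; intros HL HI.
set (j := LL / II). assert (Hj0 : 0 < j) by (unfold j; apply Rdiv_lt_0_compat; auto).
apply NNPP. intro Hn.
assert (A : forall s, p <= s <= q -> Kc s < j).
{ intros s Hs. apply Rnot_le_lt. intro H. apply Hn. exists s; split; auto. }
assert (Lt : RInt (fun s => / j * Nc s) p q < II).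
{ unfold II. apply RInt_lt; auto.
  intros; apply Cinf_cont, NK_C.
  intros; apply cont_multR. apply continuous_const. apply Cinf_cont, Nc_C.
  intros x Hx. specialize (A x ltac:(lra)). generalize (Nc_pos x) (Kc_pos x); intros.
  unfold Rdiv. rewrite Rmult_comm. apply Rmult_lt_compat_l; auto. apply Rinv_lt_contravar; auto. nra. }
assert (E : @eq R (RInt (fun s => / j * Nc s) p q) (/ j * LL)).
{ unfold LL. apply (RInt_scal (V:=R_CompleteNormedModule) Nc p q (/ j)). apply exR_cinf, Nc_C. }
rewrite E in Lt. assert (E2 : / j * LL = II) by (unfold j; field; split; lra). lra.
Qed.

Lemma Va_nonneg : 0 <= Va.
Proof. unfold Va. apply RInt_ge_0. lra. apply exR_cont; intro; apply cont_Dvn; [apply Ah1_C|apply Ah2_C]. intros; apply vn_pos. Qed.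
Lemma Vb_nonneg : 0 <= Vb.
Proof. unfold Vb. apply RInt_ge_0. lra. apply exR_cont; intro; apply cont_Dvn; [apply Bh1_C|apply Bh2_C]. intros; apply vn_pos. Qed.

Lemma margin : 0 < 2 * (LL / II) - (Va + Vb).
Proof.
generalize Hj. rewrite jindex_eq, hyp_V. generalize Va_nonneg Vb_nonneg. lra.
Qed.

Lemma var_sym f1 f2 s s' : Cinf f1 -> Cinf f2 -> p <= s <= q -> p <= s' <= q ->
  vn (f1 s - f1 s') (f2 s - f2 s') <= RInt (fun t => vn (Derive f1 t) (Derive f2 t)) p q.
Proof.
intros H1 H2 Hs Hs'. destruct (Rle_dec s' s).
- apply variation; auto; lra.
- rewrite <- vn_opp. replace (- (f1 s - f1 s')) with (f1 s' - f1 s) by ring.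
  replace (- (f2 s - f2 s')) with (f2 s' - f2 s) by ring. apply variation; auto; lra.
Qed.

Lemma AB_sum s : vn (Ah1 s + Bh1 s) (Ah2 s + Bh2 s) = 2 * Kc s.
Proof.
unfold Ah1, Bh1, Ah2, Bh2, As1, As2, Bs1, Bs2, Kc. generalize (U_unit al be _ (goodc s)) (kt_pos al be _ (goodc s)); intros U K.
unfold vn.
replace ((bt1 al be (c0 s) + kt al be (c0 s) * U1 al (c0 s) + (- bt1 al be (c0 s) + kt al be (c0 s) * U1 al (c0 s))) *
  (bt1 al be (c0 s) + kt al be (c0 s) * U1 al (c0 s) + (- bt1 al be (c0 s) + kt al be (c0 s) * U1 al (c0 s))) +
  (bt2 al be (c0 s) + kt al be (c0 s) * U2 al (c0 s) + (- bt2 al be (c0 s) + kt al be (c0 s) * U2 al (c0 s))) *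
  (bt2 al be (c0 s) + kt al be (c0 s) * U2 al (c0 s) + (- bt2 al be (c0 s) + kt al be (c0 s) * U2 al (c0 s))))
 with ((2 * kt al be (c0 s)) * (2 * kt al be (c0 s)) * (U1 al (c0 s) * U1 al (c0 s) + U2 al (c0 s) * U2 al (c0 s))) by ring.
rewrite U, Rmult_1_r. apply sqrt_square. lra.
Qed.

Lemma tri5 a1 a2 b1 b2 c1 c2 d1 d2 e1 e2 :
  vn (a1 - b1 - c1 - d1 - e1) (a2 - b2 - c2 - d2 - e2) <= vn a1 a2 + vn b1 b2 + vn c1 c2 + vn d1 d2 + vn e1 e2.
Proof.
unfold Rminus.
repeat (eapply Rle_trans; [apply vn_tri|]; apply Rplus_le_compat; [|rewrite vn_opp; apply Rle_refl]).
apply Rle_refl.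
Qed.

Section WithC1.
Variables (eta d1 : R) (c1 : R -> R).
Hypotheses (Heta : 0 < eta) (Hmarg : 0 < 2 * (LL / II) - (Va + Vb) - 2 * eta) (Hd1 : 0 < d1)
  (Hcp : forall u, Rabs (u - p) < d1 -> Rabs (Ah1 u - Ah1 p) < eta / 2 /\ Rabs (Ah2 u - Ah2 p) < eta / 2 /\
      Rabs (Bh1 u - Bh1 p) < eta / 2 /\ Rabs (Bh2 u - Bh2 p) < eta / 2)
  (Hcq : forall u, Rabs (u - q) < d1 -> Rabs (Ah1 u - Ah1 q) < eta / 2 /\ Rabs (Ah2 u - Ah2 q) < eta / 2 /\
      Rabs (Bh1 u - Bh1 q) < eta / 2 /\ Rabs (Bh2 u - Bh2 q) < eta / 2)
  (Hc1r : forall y, p - d1 / 2 <= c1 y <= q + d1 / 2).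

Lemma approx y : exists sA sB, p <= sA <= q /\ p <= sB <= q /\
  vn (Ah1 (c1 y) - Ah1 sA) (Ah2 (c1 y) - Ah2 sA) <= eta /\
  vn (Bh1 (c1 y) - Bh1 sB) (Bh2 (c1 y) - Bh2 sB) <= eta.
Proof.
set (u := c1 y). generalize (Hc1r y); fold u; intro Hu.
destruct (Rlt_dec u p) as [H1|H1].
- exists p, p. assert (Rabs (u - p) < d1) by (rewrite Rabs_left by lra; lra).
  destruct (Hcp u H) as [A1 [A2 [B1 B2]]]. split; [lra|split; [lra|split]].
  + eapply Rle_trans. apply vn_le_abs. lra.
  + eapply Rle_trans. apply vn_le_abs. lra.
- destruct (Rlt_dec q u) as [H2|H2].
  + exists q, q. assert (Rabs (u - q) < d1) by (rewrite Rabs_right by lra; lra).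
    destruct (Hcq u H) as [A1 [A2 [B1 B2]]]. split; [lra|split; [lra|split]].
    * eapply Rle_trans. apply vn_le_abs. lra.
    * eapply Rle_trans. apply vn_le_abs. lra.
  + exists u, u. split; [lra|split; [lra|split]].
    * unfold vn. rewrite !Rminus_diag, Rmult_0_l, Rplus_0_l, sqrt_0. lra.
    * unfold vn. rewrite !Rminus_diag, Rmult_0_l, Rplus_0_l, sqrt_0. lra.
Qed.

Lemma estimate y1 y2 : 0 < (Ah1 (c1 y1) + Bh1 (c1 y2)) * (Ah1 (c1 y1) + Bh1 (c1 y2)) +
                           (Ah2 (c1 y1) + Bh2 (c1 y2)) * (Ah2 (c1 y1) + Bh2 (c1 y2)).
Proof.
destruct (approx y1) as [sA [_ [HA [_ [XA _]]]]].
destruct (approx y2) as [_ [sB [_ [HB [_ XB]]]]].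
destruct exists_s1 as [s1 [Hs1 K1]].
assert (VA := var_sym Ah1 Ah2 sA s1 Ah1_C Ah2_C HA Hs1). fold Va in VA.
assert (VB := var_sym Bh1 Bh2 sB s1 Bh1_C Bh2_C HB Hs1). fold Vb in VB.
assert (T5 := tri5 (Ah1 (c1 y1) + Bh1 (c1 y2)) (Ah2 (c1 y1) + Bh2 (c1 y2))
   (Ah1 (c1 y1) - Ah1 sA) (Ah2 (c1 y1) - Ah2 sA) (Ah1 sA - Ah1 s1) (Ah2 sA - Ah2 s1)
   (Bh1 (c1 y2) - Bh1 sB) (Bh2 (c1 y2) - Bh2 sB) (Bh1 sB - Bh1 s1) (Bh2 sB - Bh2 s1)).
replace (Ah1 (c1 y1) + Bh1 (c1 y2) - (Ah1 (c1 y1) - Ah1 sA) - (Ah1 sA - Ah1 s1) - (Bh1 (c1 y2) - Bh1 sB) - (Bh1 sB - Bh1 s1))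
  with (Ah1 s1 + Bh1 s1) in T5 by ring.
replace (Ah2 (c1 y1) + Bh2 (c1 y2) - (Ah2 (c1 y1) - Ah2 sA) - (Ah2 sA - Ah2 s1) - (Bh2 (c1 y2) - Bh2 sB) - (Bh2 sB - Bh2 s1))
  with (Ah2 s1 + Bh2 s1) in T5 by ring.
rewrite AB_sum in T5.
apply vn_sq_pos. lra.
Qed.
End WithC1.

End WithC0.

End Build.

Lemma cont_delta4 f1 f2 f3 f4 x eps : Cinf f1 -> Cinf f2 -> Cinf f3 -> Cinf f4 -> 0 < eps ->
  exists d, 0 < d /\ forall u, Rabs (u - x) < d ->
   Rabs (f1 u - f1 x) < eps /\ Rabs (f2 u - f2 x) < eps /\ Rabs (f3 u - f3 x) < eps /\ Rabs (f4 u - f4 x) < eps.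
Proof.
intros H1 H2 H3 H4 He.
destruct (cont_delta f1 x eps H1 He) as [e1 [E1 K1]].
destruct (cont_delta f2 x eps H2 He) as [e2 [E2 K2]].
destruct (cont_delta f3 x eps H3 He) as [e3 [E3 K3]].
destruct (cont_delta f4 x eps H4 He) as [e4 [E4 K4]].
exists (Rmin (Rmin e1 e2) (Rmin e3 e4)). split.
repeat apply Rmin_glb_lt; auto.
intros u Hu.
assert (Rmin (Rmin e1 e2) (Rmin e3 e4) <= e1 /\ Rmin (Rmin e1 e2) (Rmin e3 e4) <= e2 /\
        Rmin (Rmin e1 e2) (Rmin e3 e4) <= e3 /\ Rmin (Rmin e1 e2) (Rmin e3 e4) <= e4).
{ repeat split.
  apply Rle_trans with (Rmin e1 e2); [apply Rmin_l|apply Rmin_l].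
  apply Rle_trans with (Rmin e1 e2); [apply Rmin_l|apply Rmin_r].
  apply Rle_trans with (Rmin e3 e4); [apply Rmin_r|apply Rmin_l].
  apply Rle_trans with (Rmin e3 e4); [apply Rmin_r|apply Rmin_r]. }
repeat split; [apply K1|apply K2|apply K3|apply K4]; lra.
Qed.

Theorem proposition2p12 (p q : R) (al be : R -> vec2) :
  p < q ->
  smooth_curve al ->
  smooth_curve be ->
  (forall s, p <= s <= q -> 0 < norm2 (dcurve al s)) ->
  (forall s, p <= s <= q -> dot2 (be s) (dcurve al s) = 0) ->
  (forall s, p <= s <= q -> norm2 (be s) < 1) ->
  jindex al be p q >
    3 / 2 * arcInt al p q
      (fun s => norm2 (nablaU al (avec al be) s) + norm2 (nablaU al (bvec al be) s)) ->
  let T := length al p q / jindex al be p q in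
  exists (P Q : R -> R) (ga : R -> R -> vec2),
    smooth1 P /\ smooth1 Q /\ smooth_map2 ga /\
    P 0 = p /\ Q 0 = q /\ P T = Q T /\
    (forall t, 0 <= t <= T -> P t <= Q t) /\
    (forall t x, Omega P Q T t x ->
       regular_at ga t x /\ timelike_at ga t x /\ maximal_at ga t x) /\
    (forall s, p <= s <= q ->
       exists x, Omega P Q T 0 x /\ ga 0 x = al s /\
         exists c1 c2 : R,
           mkV3 1 (fst (be s)) (snd (be s)) =
           v3add (v3scal c1 (Xt ga 0 x)) (v3scal c2 (Xx ga 0 x))) /\
    null_boundary ga P T /\ null_boundary ga Q T.
Proof.
intros Hpq Hal Hbe Hreg Horth Hsm Hj T.
destruct (good_nbhd p q al be Hpq Hal Hbe Hreg Hsm) as [d0 [Hd0 Hgood]].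
destruct (clamp_exists p q d0 Hpq Hd0) as [c0 [w0 [Hc0C [_ [_ [_ [Hc0id' [_ Hc0r]]]]]]]].
assert (Hc0id : forall s, p - d0 / 2 <= s <= q + d0 / 2 -> c0 s = s) by (intros; apply Hc0id'; auto).
clear Hc0id'.
assert (Mg := margin p q al be Hpq Hal Hbe Hreg Horth Hj d0 c0 Hd0 Hgood Hc0C Hc0r Hc0id).
set (j := LL p q al c0 / II p q al be c0) in *.
set (V := Va p q al be c0 + Vb p q al be c0) in *.
set (eta := (2 * j - V) / 4).
assert (Heta : 0 < eta) by (unfold eta; lra).
assert (Hmarg : 0 < 2 * j - V - 2 * eta) by (unfold eta; lra).
assert (CA1 := Ah1_C p q al be Hal Hbe d0 c0 Hgood Hc0C Hc0r).
assert (CA2 := Ah2_C p q al be Hal Hbe d0 c0 Hgood Hc0C Hc0r).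
assert (CB1 := Bh1_C p q al be Hal Hbe d0 c0 Hgood Hc0C Hc0r).
assert (CB2 := Bh2_C p q al be Hal Hbe d0 c0 Hgood Hc0C Hc0r).
destruct (cont_delta4 _ _ _ _ p (eta / 2) CA1 CA2 CB1 CB2 ltac:(lra)) as [dp [Hdp Kp]].
destruct (cont_delta4 _ _ _ _ q (eta / 2) CA1 CA2 CB1 CB2 ltac:(lra)) as [dq [Hdq Kq]].
set (d1 := Rmin dp dq).
assert (Hd1 : 0 < d1) by (unfold d1; apply Rmin_glb_lt; auto).
assert (Hcp : forall u, Rabs (u - p) < d1 -> Rabs (Ah1 al be c0 u - Ah1 al be c0 p) < eta / 2 /\ Rabs (Ah2 al be c0 u - Ah2 al be c0 p) < eta / 2 /\
      Rabs (Bh1 al be c0 u - Bh1 al be c0 p) < eta / 2 /\ Rabs (Bh2 al be c0 u - Bh2 al be c0 p) < eta / 2).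
{ intros u Hu. apply Kp. generalize (Rmin_l dp dq). fold d1. lra. }
assert (Hcq : forall u, Rabs (u - q) < d1 -> Rabs (Ah1 al be c0 u - Ah1 al be c0 q) < eta / 2 /\ Rabs (Ah2 al be c0 u - Ah2 al be c0 q) < eta / 2 /\
      Rabs (Bh1 al be c0 u - Bh1 al be c0 q) < eta / 2 /\ Rabs (Bh2 al be c0 u - Bh2 al be c0 q) < eta / 2).
{ intros u Hu. apply Kq. generalize (Rmin_r dp dq). fold d1. lra. }
destruct (clamp_exists p q (d1 / 2) Hpq ltac:(lra)) as [c1 [w1 [Hc1C [Hw1C [_ [Hw1r [Hc1id [Hw10 Hc1r]]]]]]]].
assert (Est := estimate p q al be Hpq Hal Hbe d0 c0 Hgood Hc0C Hc0r eta d1 c1 Heta Hmarg Hd1 Hcp Hcq Hc1r).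
set (a1f := fun y => Ah1 al be c0 (c1 y)).
set (a2f := fun y => Ah2 al be c0 (c1 y)).
set (b1f := fun y => Bh1 al be c0 (c1 y)).
set (b2f := fun y => Bh2 al be c0 (c1 y)).
set (C := fun y => c0 (c1 y)).
assert (HCC : Cinf C) by (intro n; unfold C; apply Ck_comp; auto).
assert (HCg : forall y, good al be (C y)) by (intro y; unfold C; apply (goodc p q al be d0 c0 Hgood Hc0r)).
set (Ff := fun y => Fs al be (C y) + (1 - w1 y)).
assert (Cdata : forall s, p <= s <= q -> c1 s = s /\ w1 s = 1 /\ C s = s).
{ intros s Hs. destruct (Hc1id s ltac:(lra)) as [W E]. split; auto. split; auto. unfold C. rewrite E. apply Hc0id; lra. }
assert (Fs_pos : forall y, 0 < Fs al be (C y)).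
{ intro y. unfold Fs. apply Rdiv_lt_0_compat. apply HCg. generalize (kt_pos al be _ (HCg y)); lra. }
apply (surface_main p q al be a1f a2f b1f b2f Ff T Hpq Hal).
- intro n; unfold a1f; apply Ck_comp; [apply CA1|apply Hc1C].
- intro n; unfold a2f; apply Ck_comp; [apply CA2|apply Hc1C].
- intro n; unfold b1f; apply Ck_comp; [apply CB1|apply Hc1C].
- intro n; unfold b2f; apply Ck_comp; [apply CB2|apply Hc1C].
- intro n; unfold Ff. apply Ck_plus. apply (CC_Fs al be Hal Hbe C HCC HCg). apply Ck_minus. apply Ck_const. apply Hw1C.
- intro y. unfold a1f, a2f, Ah1, Ah2. apply As_unit. apply (HCg y).
- intro y. unfold b1f, b2f, Bh1, Bh2. apply Bs_unit. apply (HCg y).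
- intros y1 y2. apply Est.
- intro y. unfold Ff. generalize (Fs_pos y) (Hw1r y); lra.
- exists (p - d1 / 2), (q + d1 / 2). split. lra. split.
  + intros y Hy. unfold Ff. rewrite Hw10 by lra. generalize (Fs_pos y); lra.
  + intros y Hy. unfold Ff. rewrite Hw10 by lra. generalize (Fs_pos y); lra.
- intros s Hs. destruct (Cdata s Hs) as [E1 [E2 E3]].
  unfold a1f, b1f, Ff, Ah1, Bh1. rewrite E3, E2, E1, (Hc0id s) by lra.
  generalize (good_data p q al be Hreg Hsm s Hs); intro G.
  generalize (kt_pos al be s G); intro K. destruct G as [N _].
  unfold As1, Bs1, Fs, U1, da1. field. lra.
- intros s Hs. destruct (Cdata s Hs) as [E1 [E2 E3]].
  unfold a2f, b2f, Ff, Ah2, Bh2. rewrite E3, E2, E1, (Hc0id s) by lra.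
  generalize (good_data p q al be Hreg Hsm s Hs); intro G.
  generalize (kt_pos al be s G); intro K. destruct G as [N _].
  unfold As2, Bs2, Fs, U2, da2. field. lra.
- intros s Hs. destruct (Cdata s Hs) as [E1 [E2 E3]].
  unfold a1f, b1f, Ah1, Bh1. rewrite E1, (Hc0id s) by lra.
  unfold As1, Bs1, bt1. rewrite (bU_data p q al be Horth s Hs). ring.
- intros s Hs. destruct (Cdata s Hs) as [E1 [E2 E3]].
  unfold a2f, b2f, Ah2, Bh2. rewrite E1, (Hc0id s) by lra.
  unfold As2, Bs2, bt2. rewrite (bU_data p q al be Horth s Hs). ring.
- unfold T. rewrite (length_eq p q al Hpq d0 c0 Hd0 Hc0id).
  rewrite (jindex_eq p q al be Hpq Horth d0 c0 Hd0 Hc0id).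
  assert (HL := LL_pos p q al be Hpq Hal d0 c0 Hgood Hc0C Hc0r).
  assert (HI := II_pos p q al be Hpq Hal Hbe d0 c0 Hgood Hc0C Hc0r).
  assert (E : RInt Ff p q = RInt (fun s => / 2 * (Nc al c0 s / Kc al be c0 s)) p q).
  { apply RInt_ext. rewrite Rmin_left, Rmax_right by lra. intros s Hs.
    destruct (Cdata s ltac:(lra)) as [E1 [E2 E3]]. unfold Ff. rewrite E3, E2.
    unfold Nc, Kc, Fs. rewrite (Hc0id s) by lra.
    generalize (good_data p q al be Hreg Hsm s ltac:(lra)); intro G.
    generalize (kt_pos al be s G); intro K.
    change (N0 al s / (2 * kt al be s) + (1 - 1) = / 2 * (N0 al s / kt al be s)). field. lra. }
  assert (E' : @eq R (RInt (fun s => / 2 * (Nc al c0 s / Kc al be c0 s)) p q) (/ 2 * II p q al be c0)).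
  { unfold II. apply (RInt_scal (V:=R_CompleteNormedModule) (fun s => Nc al c0 s / Kc al be c0 s) p q (/ 2)).
    apply exR_cinf. apply (NK_C p q al be Hal Hbe d0 c0 Hgood Hc0C Hc0r). }
  rewrite E, E'. field. split; lra.
Qed.
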